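(* Let $\gamma_a,\gamma_s>0$, $\sigma_B>0$, $q>0$, let $\beta_s$ be the piecewise linear coalbedo described in the context, and fix $\varepsilon_a\in(0,2)$. For $\lambda\ge0$ consider the system \[ \gamma_a T_a'=-\lambda(T_a-T_s)+\varepsilon_a\sigma_B|T_s|^3T_s-2\varepsilon_a\sigma_B|T_a|^3T_a,\qquad \gamma_s T_s'=-\lambda(T_s-T_a)-\sigma_B|T_s|^3T_s+\varepsilon_a\sigma_B|T_a|^3T_a+q\beta_s(T_s). \] Let $\lambda^*\ge0$ and let $(T_a^{eq,\lambda^*},T_s^{eq,\lambda^*})$ be a warm [respectively cold] equilibrium point of the system with $\lambda=\lambda^*$, in the sense that $T_s^{eq,\lambda^*}\notin[T_{s,-},T_{s,+}]$. Then for $\lambda$ close to $\lambda^*$ there exists a unique equilibrium point $(T_a^{eq,\lambda},T_s^{eq,\lambda})$ of the system with parameter $\lambda$ (close to $(T_a^{eq,\lambda^*},T_s^{eq,\lambda^*})$); it is asymptotically exponentially stable; the maps $\lambda\mapsto T_s^{eq,\lambda}$ and $\lambda\mapsto T_a^{eq,\lambda}$ are locally analytic; locally, $\lambda\mapsto T_s^{eq,\lambda}$ is decreasing; and locally $\lambda\mapsto T_a^{eq,\lambda}$ is increasing if $\varepsilon_a\in(0,1)$ and decreasing if $\varepsilon_a\in(1,2)$.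
   Context: The coalbedo is $\beta_s(T)=\beta_{s,-}$ for $T\le T_{s,-}$, $\beta_s(T)=\beta_{s,-}+(\beta_{s,+}-\beta_{s,-})\frac{T-T_{s,-}}{T_{s,+}-T_{s,-}}$ for $T\in[T_{s,-},T_{s,+}]$, and $\beta_s(T)=\beta_{s,+}$ for $T\ge T_{s,+}$, where $T_{s,+}>T_{s,-}>0$ and $\beta_{s,+}>\beta_{s,-}>0$. An equilibrium point is a point with nonnegative components where both right-hand sides vanish; warm means $T_s>T_{s,+}$, cold means $T_s<T_{s,-}$. *)

(* Defs.v *)
From Stdlib Require Import Reals Lra.
From Coquelicot Require Import Coquelicot.
Open Scope R_scope.

Definition coalbedo (Tm Tp bm bp T : R) : R :=
  if Rle_dec T Tm then bm
  else if Rle_dec Tp T then bp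
  else bm + (bp - bm) * (T - Tm) / (Tp - Tm).

Definition rhs_a (sigB eps lam : R) (Ta Ts : R) : R :=
  - lam * (Ta - Ts) + eps * sigB * (Rabs Ts) ^ 3 * Ts
  - 2 * eps * sigB * (Rabs Ta) ^ 3 * Ta.

Definition rhs_s (sigB q Tm Tp bm bp eps lam : R) (Ta Ts : R) : R :=
  - lam * (Ts - Ta) - sigB * (Rabs Ts) ^ 3 * Ts
  + eps * sigB * (Rabs Ta) ^ 3 * Ta + q * coalbedo Tm Tp bm bp Ts.

Definition is_equilibrium (sigB q Tm Tp bm bp eps lam Ta Ts : R) : Prop :=
  0 <= Ta /\ 0 <= Ts /\
  rhs_a sigB eps lam Ta Ts = 0 /\
  rhs_s sigB q Tm Tp bm bp eps lam Ta Ts = 0.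

Definition dist2 (a1 s1 a2 s2 : R) : R :=
  sqrt ((a1 - a2) ^ 2 + (s1 - s2) ^ 2).

Definition is_solution (ga gs sigB q Tm Tp bm bp eps lam : R)
    (Tend : R) (xa xs : R -> R) : Prop :=
  filterlim xa (at_right 0) (locally (xa 0)) /\
  filterlim xs (at_right 0) (locally (xs 0)) /\
  forall t, 0 < t < Tend ->
    is_derive xa t (rhs_a sigB eps lam (xa t) (xs t) / ga) /\
    is_derive xs t (rhs_s sigB q Tm Tp bm bp eps lam (xa t) (xs t) / gs).

Definition exp_stable (ga gs sigB q Tm Tp bm bp eps lam Ta Ts : R) : Prop :=
  exists delta C mu, 0 < delta /\ 0 < C /\ 0 < mu /\
    forall (Tend : R) (xa xs : R -> R),
      0 < Tend ->
      is_solution ga gs sigB q Tm Tp bm bp eps lam Tend xa xs ->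
      dist2 (xa 0) (xs 0) Ta Ts < delta ->
      forall t, 0 <= t < Tend ->
        dist2 (xa t) (xs t) Ta Ts <= C * exp (- mu * t) * dist2 (xa 0) (xs 0) Ta Ts.

Definition analytic_on (D : R -> Prop) (f : R -> R) : Prop :=
  forall x0, D x0 -> exists (a : nat -> R) (r : R), 0 < r /\
    forall x, D x -> Rabs (x - x0) < r -> is_pseries a (x - x0) (f x).

Definition strictly_decreasing_on (D : R -> Prop) (f : R -> R) : Prop :=
  forall x y, D x -> D y -> x < y -> f y < f x.

Definition strictly_increasing_on (D : R -> Prop) (f : R -> R) : Prop :=
  forall x y, D x -> D y -> x < y -> f x < f y.

(* Main.v *)
Require Import Defs.
From Stdlib Require Import Reals Lra Lia.
From Coquelicot Require Import Coquelicot.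
Open Scope R_scope.

Definition pw2 (p : nat -> R) := PS_mult p p.
Definition pw3 (p : nat -> R) := PS_mult p (pw2 p).
Definition pw4 (p : nat -> R) := PS_mult p (pw3 p).

Lemma PSm_0 p q : p 0%nat = 0 -> PS_mult p q 0 = 0.
Proof. intros h. unfold PS_mult; simpl. rewrite h; ring. Qed.

Lemma PSm_ext p q p' q' n :
  p 0%nat = 0 -> p' 0%nat = 0 -> q 0%nat = 0 -> q' 0%nat = 0 ->
  (forall i, (i < n)%nat -> p i = p' i) -> (forall i, (i < n)%nat -> q i = q' i) ->
  PS_mult p q n = PS_mult p' q' n.
Proof.
  intros h1 h2 h3 h4 hp hq. unfold PS_mult. apply sum_eq. intros k hk.
  destruct (Nat.eq_dec k 0) as [->|nk].
  - rewrite h1, h2; ring.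
  - destruct (Nat.eq_dec k n) as [->|nn].
    + rewrite Nat.sub_diag, h3, h4; ring.
    + rewrite hp by lia. rewrite hq by lia. reflexivity.
Qed.

Lemma pw2_0 p : p 0%nat = 0 -> pw2 p 0 = 0.
Proof. intros; apply PSm_0; auto. Qed.
Lemma pw3_0 p : p 0%nat = 0 -> pw3 p 0 = 0.
Proof. intros; apply PSm_0; auto. Qed.
Lemma pw4_0 p : p 0%nat = 0 -> pw4 p 0 = 0.
Proof. intros; apply PSm_0; auto. Qed.

Lemma pw2_ext p p' n : p 0%nat = 0 -> p' 0%nat = 0 ->
  (forall i, (i < n)%nat -> p i = p' i) -> pw2 p n = pw2 p' n.
Proof. intros; apply PSm_ext; auto. Qed.
Lemma pw3_ext p p' n : p 0%nat = 0 -> p' 0%nat = 0 ->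
  (forall i, (i < n)%nat -> p i = p' i) -> pw3 p n = pw3 p' n.
Proof. intros h1 h2 h. apply PSm_ext; auto using pw2_0.
  intros i hi. apply pw2_ext; auto. intros; apply h; lia. Qed.
Lemma pw4_ext p p' n : p 0%nat = 0 -> p' 0%nat = 0 ->
  (forall i, (i < n)%nat -> p i = p' i) -> pw4 p n = pw4 p' n.
Proof. intros h1 h2 h. apply PSm_ext; auto using pw3_0.
  intros i hi. apply pw3_ext; auto. intros; apply h; lia. Qed.

Record prm := mkprm { pd : R; pb1 : R; pb2 : R; pp2 : R; pp3 : R; pp4 : R;
  pr2 : R; pr3 : R; pr4 : R }.

Definition rowc (c : prm) (X Y : nat -> R) (n : nat) : R :=
  (if Nat.eqb n 1 then pd c else 0)
  + (match n with O => 0 | S m => pb1 c * X m + pb2 c * Y m end)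
  + (pp2 c * pw2 X n + pp3 c * pw3 X n + pp4 c * pw4 X n)
  + (pr2 c * pw2 Y n + pr3 c * pw3 Y n + pr4 c * pw4 Y n).

Definition rowv (c : prm) (u x y : R) : R :=
  pd c * u + u * (pb1 c * x + pb2 c * y)
  + (pp2 c * x^2 + pp3 c * x^3 + pp4 c * x^4)
  + (pr2 c * y^2 + pr3 c * y^3 + pr4 c * y^4).

Lemma rowc_0 c X Y : X 0%nat = 0 -> Y 0%nat = 0 -> rowc c X Y 0 = 0.
Proof. intros h1 h2. unfold rowc. simpl Nat.eqb.
  rewrite !pw2_0, !pw3_0, !pw4_0 by auto. ring. Qed.

Lemma rowc_ext c X Y X' Y' n : X 0%nat = 0 -> X' 0%nat = 0 -> Y 0%nat = 0 -> Y' 0%nat = 0 ->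
  (forall i, (i < n)%nat -> X i = X' i) -> (forall i, (i < n)%nat -> Y i = Y' i) ->
  rowc c X Y n = rowc c X' Y' n.
Proof.
  intros h1 h2 h3 h4 hx hy. unfold rowc.
  rewrite (pw2_ext X X' n), (pw3_ext X X' n), (pw4_ext X X' n),
    (pw2_ext Y Y' n), (pw3_ext Y Y' n), (pw4_ext Y Y' n) by auto.
  destruct n as [|m]; [reflexivity|].
  rewrite (hx m), (hy m) by lia. reflexivity.
Qed.

Fixpoint cf (c1 c2 : prm) (n : nat) : nat -> R * R :=
  match n with
  | O => fun _ => (0, 0)
  | S m => let f := cf c1 c2 m in
     fun i => if Nat.leb i m then f i else
       if Nat.eqb i (S m) then
         (rowc c1 (fun j => fst (f j)) (fun j => snd (f j)) (S m),
          rowc c2 (fun j => fst (f j)) (fun j => snd (f j)) (S m))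
       else (0, 0)
  end.

Definition SX c1 c2 (i : nat) := fst (cf c1 c2 i i).
Definition SY c1 c2 (i : nat) := snd (cf c1 c2 i i).

Lemma cf_top c1 c2 m : cf c1 c2 (S m) (S m) =
  (rowc c1 (fun j => fst (cf c1 c2 m j)) (fun j => snd (cf c1 c2 m j)) (S m),
   rowc c2 (fun j => fst (cf c1 c2 m j)) (fun j => snd (cf c1 c2 m j)) (S m)).
Proof.
  cbn -[Nat.leb Nat.eqb rowc].
  replace (Nat.leb (S m) m) with false by (symmetry; apply Nat.leb_gt; lia).
  rewrite Nat.eqb_refl. reflexivity.
Qed.

Lemma cf_stable c1 c2 n i : (i <= n)%nat -> cf c1 c2 n i = cf c1 c2 i i.
Proof.
  induction n as [|m IH]; intros hi.
  - assert (i = 0%nat) by lia. subst. reflexivity.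
  - destruct (Nat.leb i m) eqn:E.
    + apply Nat.leb_le in E. rewrite <- IH by auto.
      cbn -[Nat.leb Nat.eqb rowc]. rewrite (proj2 (Nat.leb_le i m) E). reflexivity.
    + apply Nat.leb_gt in E. assert (i = S m) by lia. subst. reflexivity.
Qed.

Lemma SX_0 c1 c2 : SX c1 c2 0 = 0.
Proof. reflexivity. Qed.
Lemma SY_0 c1 c2 : SY c1 c2 0 = 0.
Proof. reflexivity. Qed.

Lemma SXY_rec c1 c2 n : SX c1 c2 n = rowc c1 (SX c1 c2) (SY c1 c2) n /\
                        SY c1 c2 n = rowc c2 (SX c1 c2) (SY c1 c2) n.
Proof.
  destruct n as [|m].
  - rewrite !rowc_0 by reflexivity. split; reflexivity.
  - assert (hf : forall i, (i < S m)%nat -> cf c1 c2 m i = cf c1 c2 i i).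
    { intros; apply cf_stable; lia. }
    assert (h0 : cf c1 c2 m 0 = (0,0)).
    { rewrite cf_stable by lia. reflexivity. }
    split; [unfold SX at 1|unfold SY at 1]; rewrite cf_top; simpl fst; simpl snd;
    apply rowc_ext; try (rewrite h0; reflexivity); try reflexivity;
      intros i hi; unfold SX, SY; rewrite hf; auto.
Qed.

Lemma sum_rev f N : sum_f_R0 (fun k => f (N - k)%nat) N = sum_f_R0 f N.
Proof.
  induction N as [|N IH].
  - reflexivity.
  - rewrite decomp_sum by lia. simpl (S N - 0)%nat. simpl Init.Nat.pred.
    replace (sum_f_R0 (fun i => f (S N - S i)%nat) N) with (sum_f_R0 (fun k => f (N - k)%nat) N)
      by (apply sum_eq; intros; f_equal).
    rewrite IH. simpl. ring.
Qed.

Definition winv (k : nat) : R := match k with O => 0 | _ => / (INR k)^2 end.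

Lemma sum_winv_S N : sum_f_R0 winv (S N) <= 2 - / INR (S N).
Proof.
  induction N as [|N IH].
  - simpl. rewrite Rinv_1. lra.
  - rewrite tech5. 
    assert (h1 : 0 < INR (S N)) by (apply lt_0_INR; lia).
    assert (h2 : INR (S (S N)) = INR (S N) + 1) by (rewrite S_INR; ring).
    unfold winv at 2. rewrite h2.
    assert (/ (INR (S N) + 1)^2 <= / INR (S N) - / (INR (S N) + 1)).
    { replace (/ INR (S N) - / (INR (S N) + 1)) with (/ (INR (S N) * (INR (S N) + 1))) by (field; lra).
      apply Rinv_le_contravar; [nra|]. nra. }
    lra.
Qed.

Lemma sum_winv N : sum_f_R0 winv N <= 2.
Proof.
  destruct N as [|N].
  - simpl. lra.
  - pose proof (sum_winv_S N). assert (0 < / INR (S N)) by (apply Rinv_0_lt_compat, lt_0_INR; lia). lra.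
Qed.

Lemma winv_ge0 k : 0 <= winv k.
Proof. destruct k; unfold winv; [lra|]. apply Rlt_le, Rinv_0_lt_compat. 
  assert (0 < INR (S k)) by (apply lt_0_INR; lia). apply pow_lt; lra. Qed.

Lemma key_ineq (x y : R) : 0 < x -> 0 < y ->
  / (x^2 * y^2) <= 2 / (x + y)^2 * (/ x^2 + / y^2).
Proof.
  intros hx hy.
  assert (2 / (x + y)^2 * (/ x^2 + / y^2) - / (x^2 * y^2) = (x - y)^2 / (x^2 * y^2 * (x+y)^2))
    by (field; lra).
  assert (0 <= (x - y)^2 / (x^2 * y^2 * (x+y)^2)).
  { apply Rdiv_le_0_compat; [apply pow2_ge_0|]. 
    apply Rmult_lt_0_compat; [apply Rmult_lt_0_compat|]; apply pow_lt; lra. }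
  lra.
Qed.

Lemma PSm_bound p q a b Rr n : 0 < Rr -> 0 <= a -> 0 <= b -> p 0%nat = 0 -> q 0%nat = 0 ->
  (forall m, (1 <= m < n)%nat -> Rabs (p m) <= a * Rr^m / (INR m)^2) ->
  (forall m, (1 <= m < n)%nat -> Rabs (q m) <= b * Rr^m / (INR m)^2) ->
  (1 <= n)%nat -> Rabs (PS_mult p q n) <= 8 * a * b * Rr^n / (INR n)^2.
Proof.
  intros hR ha hb hp0 hq0 hp hq hn.
  assert (hn0 : 0 < INR n) by (apply lt_0_INR; lia).
  set (C := a * b * Rr^n * (2 / (INR n)^2)).
  assert (hC : 0 <= C).
  { unfold C. apply Rmult_le_pos; [apply Rmult_le_pos; [nra|apply pow_le; lra]|].
    apply Rdiv_le_0_compat; [lra|nra]. }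
  eapply Rle_trans; [apply sum_f_R0_triangle|].
  eapply Rle_trans.
  { apply (sum_Rle _ (fun k => (winv k + winv (n - k)%nat) * C)).
    intros k hk.
    assert (hB : forall j, 0 <= (winv j + winv (n - j)%nat) * C)
      by (intro j; apply Rmult_le_pos; [pose proof (winv_ge0 j); pose proof (winv_ge0 (n-j)); lra|auto]).
    destruct (Nat.eq_dec k 0) as [->|nk].
    { rewrite hp0, Rmult_0_l, Rabs_R0. apply hB. }
    destruct (Nat.eq_dec k n) as [->|nn].
    { replace (q (n - n)%nat) with 0 by (rewrite Nat.sub_diag; auto). rewrite Rmult_0_r, Rabs_R0. apply hB. }
    rewrite Rabs_mult.
    assert (hk0 : 0 < INR k) by (apply lt_0_INR; lia).
    assert (hnk0 : 0 < INR (n - k)) by (apply lt_0_INR; lia).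
    assert (hsum : INR k + INR (n - k) = INR n) by (rewrite <- plus_INR; f_equal; lia).
    pose proof (hp k ltac:(lia)) as e1. pose proof (hq (n - k)%nat ltac:(lia)) as e2.
    eapply Rle_trans.
    { apply Rmult_le_compat; try apply Rabs_pos; [exact e1|exact e2]. }
    replace (a * Rr ^ k / INR k ^ 2 * (b * Rr ^ (n - k) / INR (n - k) ^ 2))
      with (a * b * Rr^n * / (INR k ^2 * INR (n - k) ^2)).
    2:{ replace (Rr^n) with (Rr^k * Rr^(n-k)) by (rewrite <- pow_add; f_equal; lia).
        field. split; lra. }
    unfold C. 
    replace ((winv k + winv (n - k)) * (a * b * Rr ^ n * (2 / INR n ^ 2)))
      with (a * b * Rr^n * (2 / INR n ^ 2 * (winv k + winv (n - k)))) by ring.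
    apply Rmult_le_compat_l; [apply Rmult_le_pos; [nra|apply pow_le; lra]|].
    destruct k as [|k']; [lia|]. destruct (n - S k')%nat as [|j] eqn:E; [lia|].
    unfold winv. rewrite <- hsum, <- E. apply key_ineq; auto. rewrite E; auto. }
  rewrite <- scal_sum, plus_sum, (sum_rev winv n).
  pose proof (sum_winv n).
  replace (8 * a * b * Rr ^ n / INR n ^ 2) with (C * 4) by (unfold C; field; lra).
  apply Rmult_le_compat_l; auto. lra.
Qed.

Definition prm_bd (c : prm) (M : R) : Prop :=
  Rabs (pd c) <= M /\ Rabs (pb1 c) <= M /\ Rabs (pb2 c) <= M /\
  Rabs (pp2 c) <= M /\ Rabs (pp3 c) <= M /\ Rabs (pp4 c) <= M /\
  Rabs (pr2 c) <= M /\ Rabs (pr3 c) <= M /\ Rabs (pr4 c) <= M.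

Lemma pw_bounds X A Rr n : 0 < Rr -> 0 <= A -> A <= 1 -> X 0%nat = 0 ->
  (forall m, (1 <= m < n)%nat -> Rabs (X m) <= A * Rr^m / (INR m)^2) ->
  (1 <= n)%nat ->
  Rabs (pw2 X n) <= 512 * A * (A * Rr^n / (INR n)^2) /\
  Rabs (pw3 X n) <= 512 * A * (A * Rr^n / (INR n)^2) /\
  Rabs (pw4 X n) <= 512 * A * (A * Rr^n / (INR n)^2).
Proof.
  intros hR hA hA1 h0 hX hn.
  assert (hE : 0 <= A * Rr^n / (INR n)^2).
  { apply Rdiv_le_0_compat; [apply Rmult_le_pos; [lra|apply pow_le; lra]|].
    assert (0 < INR n) by (apply lt_0_INR; lia). apply pow_lt; lra. }
  assert (b2 : forall m, (1 <= m <= n)%nat -> Rabs (pw2 X m) <= 8 * A * A * Rr^m / (INR m)^2).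
  { intros m hm. apply PSm_bound; [lra|lra|lra|auto|auto|intros; apply hX; lia|intros; apply hX; lia|lia]. }
  assert (b3 : forall m, (1 <= m <= n)%nat -> Rabs (pw3 X m) <= 8 * A * (8 * A * A) * Rr^m / (INR m)^2).
  { intros m hm. apply PSm_bound; [lra|lra|nra|auto|apply pw2_0; auto|intros; apply hX; lia|intros; apply b2; lia|lia]. }
  assert (b4 : Rabs (pw4 X n) <= 8 * A * (8 * A * (8 * A * A)) * Rr^n / (INR n)^2).
  { apply PSm_bound; [lra|lra|nra|auto|apply pw3_0; auto|intros; apply hX; lia|intros; apply b3; lia|lia]. }
  specialize (b2 n ltac:(lia)). specialize (b3 n ltac:(lia)).
  set (E := A * Rr^n / (INR n)^2) in *.
  replace (8 * A * A * Rr ^ n / INR n ^ 2) with (8 * A * E) in b2 by (unfold E; field;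
    assert (0 < INR n) by (apply lt_0_INR; lia); lra).
  replace (8 * A * (8 * A * A) * Rr ^ n / INR n ^ 2) with (64 * A * A * E) in b3 by (unfold E; field;
    assert (0 < INR n) by (apply lt_0_INR; lia); lra).
  replace (8 * A * (8 * A * (8 * A * A)) * Rr ^ n / INR n ^ 2) with (512 * A * A * A * E) in b4 by (unfold E; field;
    assert (0 < INR n) by (apply lt_0_INR; lia); lra).
  assert (A * A <= A) by nra. assert (A * A * A <= A * A) by nra.
  assert (0 <= A * E) by nra. assert (A * A * E <= A * E) by nra. assert (A*A*A*E <= A*A*E) by nra.
  split; [|split]; nra.
Qed.

Lemma abs_mul_le (p w M B : R) : Rabs p <= M -> Rabs w <= B -> Rabs (p * w) <= M * B.
Proof. intros h1 h2. rewrite Rabs_mult. apply Rmult_le_compat; auto; apply Rabs_pos. Qed.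

Lemma row_bound c X Y M n : 1 <= M -> prm_bd c M ->
  X 0%nat = 0 -> Y 0%nat = 0 ->
  (forall m, (1 <= m < n)%nat -> Rabs (X m) <= (/ (8192 * M)) * (8 * M / / (8192 * M))^m / (INR m)^2) ->
  (forall m, (1 <= m < n)%nat -> Rabs (Y m) <= (/ (8192 * M)) * (8 * M / / (8192 * M))^m / (INR m)^2) ->
  (1 <= n)%nat ->
  Rabs (rowc c X Y n) <= (/ (8192 * M)) * (8 * M / / (8192 * M))^n / (INR n)^2.
Proof.
  intros hM hc hX0 hY0 hX hY hn.
  set (A := / (8192 * M)) in *. set (Rr := 8 * M / A) in *.
  assert (hA : 0 < A) by (unfold A; apply Rinv_0_lt_compat; lra).
  assert (hA1 : A * M = / 8192) by (unfold A; field; lra).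
  assert (hA2 : A <= 1).
  { assert (A * 1 <= A * M) by (apply Rmult_le_compat_l; lra). lra. }
  assert (hR : 0 < Rr) by (unfold Rr; apply Rdiv_lt_0_compat; lra).
  assert (hRA : Rr * A = 8 * M) by (unfold Rr; field; lra).
  assert (hn0 : 0 < INR n) by (apply lt_0_INR; lia).
  set (E := A * Rr^n / (INR n)^2).
  assert (hE : 0 < E) by (unfold E; apply Rdiv_lt_0_compat; [apply Rmult_lt_0_compat; [lra|apply pow_lt; lra]|apply pow_lt; lra]).
  destruct (pw_bounds X A Rr n hR (Rlt_le _ _ hA) hA2 hX0 hX hn) as [x2 [x3 x4]].
  destruct (pw_bounds Y A Rr n hR (Rlt_le _ _ hA) hA2 hY0 hY hn) as [y2 [y3 y4]].
  fold E in x2, x3, x4, y2, y3, y4.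
  destruct hc as [cd [cb1 [cb2 [cp2 [cp3 [cp4 [cr2 [cr3 cr4]]]]]]]].
  assert (P : Rabs (pp2 c * pw2 X n + pp3 c * pw3 X n + pp4 c * pw4 X n)
             + Rabs (pr2 c * pw2 Y n + pr3 c * pw3 Y n + pr4 c * pw4 Y n) <= 6 * (M * (512 * A * E))).
  { pose proof (abs_mul_le _ _ _ _ cp2 x2). pose proof (abs_mul_le _ _ _ _ cp3 x3).
    pose proof (abs_mul_le _ _ _ _ cp4 x4). pose proof (abs_mul_le _ _ _ _ cr2 y2).
    pose proof (abs_mul_le _ _ _ _ cr3 y3). pose proof (abs_mul_le _ _ _ _ cr4 y4).
    pose proof (Rabs_triang (pp2 c * pw2 X n + pp3 c * pw3 X n) (pp4 c * pw4 X n)).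
    pose proof (Rabs_triang (pp2 c * pw2 X n) (pp3 c * pw3 X n)).
    pose proof (Rabs_triang (pr2 c * pw2 Y n + pr3 c * pw3 Y n) (pr4 c * pw4 Y n)).
    pose proof (Rabs_triang (pr2 c * pw2 Y n) (pr3 c * pw3 Y n)).
    lra. }
  assert (P' : 6 * (M * (512 * A * E)) = (3072 / 8192) * E).
  { replace (6 * (M * (512 * A * E))) with (3072 * (A * M) * E) by ring. rewrite hA1. field. }
  unfold rowc.
  pose proof (Rabs_triang ((if (n =? 1)%nat then pd c else 0) +
      match n with | 0%nat => 0 | S m => pb1 c * X m + pb2 c * Y m end +
      (pp2 c * pw2 X n + pp3 c * pw3 X n + pp4 c * pw4 X n))
     (pr2 c * pw2 Y n + pr3 c * pw3 Y n + pr4 c * pw4 Y n)) as T1.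
  pose proof (Rabs_triang ((if (n =? 1)%nat then pd c else 0) +
      match n with | 0%nat => 0 | S m => pb1 c * X m + pb2 c * Y m end)
      (pp2 c * pw2 X n + pp3 c * pw3 X n + pp4 c * pw4 X n)) as T2.
  pose proof (Rabs_triang (if (n =? 1)%nat then pd c else 0)
      (match n with | 0%nat => 0 | S m => pb1 c * X m + pb2 c * Y m end)) as T3.
  assert (D : Rabs (if (n =? 1)%nat then pd c else 0) +
      Rabs (match n with | 0%nat => 0 | S m => pb1 c * X m + pb2 c * Y m end) <= (5/8) * E).
  { destruct n as [|[|m]]; [lia| |].
    - simpl Nat.eqb. cbv iota. rewrite hX0, hY0, !Rmult_0_r, Rplus_0_r, Rabs_R0.
      assert (E = A * Rr) by (unfold E; simpl; field). 
      assert (E = 8 * M) by nra. lra.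
    - simpl Nat.eqb. cbv iota. rewrite Rabs_R0.
      assert (hm0 : 0 < INR (S m)) by (apply lt_0_INR; lia).
      assert (hSS : INR (S (S m)) = INR (S m) + 1) by (rewrite S_INR; ring).
      assert (hXm := hX (S m) ltac:(lia)). assert (hYm := hY (S m) ltac:(lia)).
      set (F := A * Rr ^ S m / INR (S m) ^ 2) in *.
      assert (hF : F <= 4 * E / Rr).
      { unfold F, E. rewrite hSS, <- (tech_pow_Rmult Rr (S m)).
        set (k := INR (S m)) in *. set (G := A * Rr ^ S m).
        assert (hG : 0 < G) by (unfold G; apply Rmult_lt_0_compat; [lra|apply pow_lt; lra]).
        replace (4 * (A * (Rr * Rr ^ S m) / (k + 1) ^ 2) / Rr) with (4 * G / (k+1)^2)
          by (unfold G; field; lra).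
        assert (hk1 : 1 <= k) by (unfold k; apply (le_INR 1); lia).
        assert (4 * G / (k+1)^2 - G / k^2 = G * ((k - 1) * (3 * k + 1)) / (k^2 * (k+1)^2))
          by (field; lra).
        assert (0 <= G * ((k - 1) * (3 * k + 1)) / (k^2 * (k+1)^2)).
        { apply Rdiv_le_0_compat. apply Rmult_le_pos; [lra|nra].
          apply Rmult_lt_0_compat; apply pow_lt; lra. }
        lra. }
      assert (hAs : A <= / 8192).
      { assert (A * 1 <= A * M) by (apply Rmult_le_compat_l; lra). lra. }
      assert (h8 : 8 * M * E / Rr = A * E) by (unfold Rr; field; lra).
      pose proof (abs_mul_le _ _ _ _ cb1 hXm). pose proof (abs_mul_le _ _ _ _ cb2 hYm).
      pose proof (Rabs_triang (pb1 c * X (S m)) (pb2 c * Y (S m))).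
      assert (M * F <= M * (4 * E / Rr)) by (apply Rmult_le_compat_l; lra).
      assert (M * (4 * E / Rr) = A * E / 2) by (rewrite <- h8; field; lra).
      assert (A * E <= E / 8192) by nra.
      lra. }
  lra.
Qed.

Lemma SXY_bound c1 c2 M : 1 <= M -> prm_bd c1 M -> prm_bd c2 M ->
  forall n, (1 <= n)%nat ->
  Rabs (SX c1 c2 n) <= (/ (8192 * M)) * (8 * M / / (8192 * M))^n / (INR n)^2 /\
  Rabs (SY c1 c2 n) <= (/ (8192 * M)) * (8 * M / / (8192 * M))^n / (INR n)^2.
Proof.
  intros hM h1 h2.
  assert (H : forall N n, (1 <= n <= N)%nat ->
    Rabs (SX c1 c2 n) <= (/ (8192 * M)) * (8 * M / / (8192 * M))^n / (INR n)^2 /\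
    Rabs (SY c1 c2 n) <= (/ (8192 * M)) * (8 * M / / (8192 * M))^n / (INR n)^2).
  { induction N as [|N IH]; intros n hn; [lia|].
    destruct (Nat.eq_dec n (S N)) as [->|ne]; [|apply IH; lia].
    destruct (SXY_rec c1 c2 (S N)) as [e1 e2]. rewrite e1, e2.
    split; apply row_bound; auto; try reflexivity; try lia;
      intros m hm; apply IH; lia. }
  intros n hn. apply (H n); lia.
Qed.

Lemma cv_of_bound a K Rr u : 0 < Rr -> (forall n, Rabs (a n) <= K * Rr^n) -> Rabs u < / Rr ->
  Rbar_lt (Rabs u) (CV_radius a).
Proof.
  intros hR hb hu.
  destruct (CV_radius_bounded a) as [ub _].
  assert (hle : Rbar_le (/ Rr) (CV_radius a)).
  { apply ub. exists K. intros n. rewrite Rabs_mult, <- RPow_abs.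
    rewrite (Rabs_pos_eq (/ Rr)) by (apply Rlt_le, Rinv_0_lt_compat; lra).
    eapply Rle_trans. apply Rmult_le_compat_r. apply pow_le, Rlt_le, Rinv_0_lt_compat; lra.
    apply hb. rewrite Rmult_assoc, <- Rpow_mult_distr, Rinv_r, pow1 by lra. lra. }
  eapply Rbar_lt_le_trans; [|exact hle]. simpl. exact hu.
Qed.

Lemma pser_single u : is_pseries (fun n => 0 ^ n) u 1.
Proof.
  assert (h := is_series_geom 0 ltac:(rewrite Rabs_R0; lra)).
  replace (/ (1 - 0)) with 1 in h by (field).
  unfold is_pseries. eapply is_series_ext; [|exact h].
  intros n. rewrite pow_n_pow. unfold scal; simpl; unfold mult; simpl.
  destruct n; simpl. unfold one; simpl; ring. rewrite !Rmult_0_l, Rmult_0_r; reflexivity.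
Qed.

Lemma rowc_series c X Y u x y x2 x3 x4 y2 y3 y4 :
  is_pseries X u x -> is_pseries Y u y ->
  is_pseries (pw2 X) u x2 -> is_pseries (pw3 X) u x3 -> is_pseries (pw4 X) u x4 ->
  is_pseries (pw2 Y) u y2 -> is_pseries (pw3 Y) u y3 -> is_pseries (pw4 Y) u y4 ->
  is_pseries (rowc c X Y) u
    (pd c * u + u * (pb1 c * x + pb2 c * y) + (pp2 c * x2 + pp3 c * x3 + pp4 c * x4)
     + (pr2 c * y2 + pr3 c * y3 + pr4 c * y4)).
Proof.
  intros hx hy hx2 hx3 hx4 hy2 hy3 hy4.
  assert (mc : forall a : R, mult u a = mult a u) by (intros; apply Rmult_comm).
  assert (S1 := is_pseries_incr_1 _ _ _ (is_pseries_scal (pd c) _ _ _ (mc _) (pser_single u))).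
  assert (S2 := is_pseries_incr_1 _ _ _ (is_pseries_plus _ _ _ _ _
    (is_pseries_scal (pb1 c) _ _ _ (mc _) hx) (is_pseries_scal (pb2 c) _ _ _ (mc _) hy))).
  assert (S3 := is_pseries_plus _ _ _ _ _ (is_pseries_plus _ _ _ _ _
    (is_pseries_scal (pp2 c) _ _ _ (mc _) hx2) (is_pseries_scal (pp3 c) _ _ _ (mc _) hx3))
    (is_pseries_scal (pp4 c) _ _ _ (mc _) hx4)).
  assert (S4 := is_pseries_plus _ _ _ _ _ (is_pseries_plus _ _ _ _ _
    (is_pseries_scal (pr2 c) _ _ _ (mc _) hy2) (is_pseries_scal (pr3 c) _ _ _ (mc _) hy3))
    (is_pseries_scal (pr4 c) _ _ _ (mc _) hy4)).
  assert (T := is_pseries_plus _ _ _ _ _ (is_pseries_plus _ _ _ _ _ (is_pseries_plus _ _ _ _ _ S1 S2) S3) S4).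
  match type of T with is_pseries _ _ ?v => replace (pd c * u + u * (pb1 c * x + pb2 c * y) + (pp2 c * x2 + pp3 c * x3 + pp4 c * x4)
     + (pr2 c * y2 + pr3 c * y3 + pr4 c * y4)) with v end.
  - eapply is_pseries_ext; [|exact T].
    intros [|[|k]]; unfold rowc, PS_plus, PS_scal, PS_incr_1; simpl; unfold plus, scal, zero; simpl;
      unfold mult; simpl; ring.
  - unfold plus, scal; simpl; unfold mult; simpl; ring.
Qed.

Definition nrm (c : prm) : R := Rabs (pd c) + Rabs (pb1 c) + Rabs (pb2 c) +
  Rabs (pp2 c) + Rabs (pp3 c) + Rabs (pp4 c) + Rabs (pr2 c) + Rabs (pr3 c) + Rabs (pr4 c).

Lemma nrm_bd c M : nrm c <= M -> prm_bd c M.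
Proof.
  unfold nrm, prm_bd. intros h.
  pose proof (Rabs_pos (pd c)). pose proof (Rabs_pos (pb1 c)). pose proof (Rabs_pos (pb2 c)).
  pose proof (Rabs_pos (pp2 c)). pose proof (Rabs_pos (pp3 c)). pose proof (Rabs_pos (pp4 c)).
  pose proof (Rabs_pos (pr2 c)). pose proof (Rabs_pos (pr3 c)). pose proof (Rabs_pos (pr4 c)).
  repeat split; lra.
Qed.

Lemma nrm_ge0 c : 0 <= nrm c.
Proof. unfold nrm.
  pose proof (Rabs_pos (pd c)). pose proof (Rabs_pos (pb1 c)). pose proof (Rabs_pos (pb2 c)).
  pose proof (Rabs_pos (pp2 c)). pose proof (Rabs_pos (pp3 c)). pose proof (Rabs_pos (pp4 c)).
  pose proof (Rabs_pos (pr2 c)). pose proof (Rabs_pos (pr3 c)). pose proof (Rabs_pos (pr4 c)).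
  lra. Qed.

Lemma seq_bounds X M : 1 <= M -> X 0%nat = 0 ->
  (forall n, (1 <= n)%nat -> Rabs (X n) <= (/ (8192 * M)) * (8 * M / / (8192 * M))^n / (INR n)^2) ->
  forall n, Rabs (X n) <= (/ (8192 * M)) * (8 * M / / (8192 * M))^n /\
    Rabs (pw2 X n) <= 512 * (/ (8192 * M)) * (/ (8192 * M)) * (8 * M / / (8192 * M))^n /\
    Rabs (pw3 X n) <= 512 * (/ (8192 * M)) * (/ (8192 * M)) * (8 * M / / (8192 * M))^n /\
    Rabs (pw4 X n) <= 512 * (/ (8192 * M)) * (/ (8192 * M)) * (8 * M / / (8192 * M))^n.
Proof.
  intros hM h0 hb n.
  set (A := / (8192 * M)) in *. set (Rr := 8 * M / A) in *.
  assert (hA : 0 < A) by (unfold A; apply Rinv_0_lt_compat; lra).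
  assert (hA2 : A <= 1).
  { assert (A * 1 <= A * M) by (apply Rmult_le_compat_l; lra).
    assert (A * M = / 8192) by (unfold A; field; lra). lra. }
  assert (hR : 0 < Rr) by (unfold Rr; apply Rdiv_lt_0_compat; lra).
  assert (hRn : 0 < Rr ^ n) by (apply pow_lt; lra).
  destruct n as [|n].
  - rewrite h0, pw2_0, pw3_0, pw4_0, Rabs_R0 by auto. simpl.
    repeat split; try nra. 
  - assert (hn : 1 <= INR (S n)) by (apply (le_INR 1); lia).
    assert (hdiv : forall K, 0 <= K -> K / INR (S n) ^ 2 <= K).
    { intros K hK. unfold Rdiv. rewrite <- (Rmult_1_r K) at 2. apply Rmult_le_compat_l; auto.
      rewrite <- Rinv_1. apply Rinv_le_contravar; [lra|]. nra. }
    destruct (pw_bounds X A Rr (S n) hR (Rlt_le _ _ hA) hA2 h0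
                (fun m hm => hb m ltac:(lia)) ltac:(lia)) as [b2 [b3 b4]].
    pose proof (hb (S n) ltac:(lia)) as b1.
    assert (e1 := hdiv (A * Rr ^ S n) ltac:(nra)).
    assert (e2 : 512 * A * (A * Rr ^ S n / INR (S n) ^ 2) <= 512 * A * A * Rr ^ S n).
    { replace (512 * A * A * Rr ^ S n) with (512 * A * (A * Rr ^ S n)) by ring.
      apply Rmult_le_compat_l; [lra|]. exact e1. }
    repeat split; lra.
Qed.

Lemma ps_fix c1 c2 eps : 0 < eps -> exists r, 0 < r /\ exists X Y : nat -> R,
  X 0%nat = 0 /\ Y 0%nat = 0 /\ forall u, Rabs u < r ->
  is_pseries X u (PSeries X u) /\ is_pseries Y u (PSeries Y u) /\
  Rabs (PSeries X u) < eps /\ Rabs (PSeries Y u) < eps /\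
  PSeries X u = rowv c1 u (PSeries X u) (PSeries Y u) /\
  PSeries Y u = rowv c2 u (PSeries X u) (PSeries Y u).
Proof.
  intros heps.
  set (M := 1 + nrm c1 + nrm c2).
  assert (hM : 1 <= M) by (unfold M; pose proof (nrm_ge0 c1); pose proof (nrm_ge0 c2); lra).
  assert (h1 : prm_bd c1 M) by (apply nrm_bd; unfold M; pose proof (nrm_ge0 c2); lra).
  assert (h2 : prm_bd c2 M) by (apply nrm_bd; unfold M; pose proof (nrm_ge0 c1); lra).
  pose proof (SXY_bound c1 c2 M hM h1 h2) as hb.
  set (X := SX c1 c2). set (Y := SY c1 c2).
  assert (bX := seq_bounds X M hM (SX_0 c1 c2) (fun n hn => proj1 (hb n hn))).
  assert (bY := seq_bounds Y M hM (SY_0 c1 c2) (fun n hn => proj2 (hb n hn))).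
  set (A := / (8192 * M)) in *. set (Rr := 8 * M / A) in *.
  assert (hA : 0 < A) by (unfold A; apply Rinv_0_lt_compat; lra).
  assert (hR : 0 < Rr) by (unfold Rr; apply Rdiv_lt_0_compat; lra).
  assert (CV : forall u, Rabs u < / Rr ->
    Rbar_lt (Rabs u) (CV_radius X) /\ Rbar_lt (Rabs u) (CV_radius (pw2 X)) /\
    Rbar_lt (Rabs u) (CV_radius (pw3 X)) /\ Rbar_lt (Rabs u) (CV_radius (pw4 X)) /\
    Rbar_lt (Rabs u) (CV_radius Y) /\ Rbar_lt (Rabs u) (CV_radius (pw2 Y)) /\
    Rbar_lt (Rabs u) (CV_radius (pw3 Y)) /\ Rbar_lt (Rabs u) (CV_radius (pw4 Y))).
  { intros u hu. repeat split; eapply cv_of_bound; eauto; intro n;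
      [apply (bX n)|apply (bX n)|apply (bX n)|apply (bX n)|apply (bY n)|apply (bY n)|apply (bY n)|apply (bY n)]. }
  assert (hr0 : 0 < / Rr) by (apply Rinv_0_lt_compat; lra).
  assert (hz : Rabs 0 < / Rr) by (rewrite Rabs_R0; lra).
  destruct (CV 0 hz) as [cx [_ [_ [_ [cy _]]]]].
  pose proof (PSeries_continuity X 0 cx) as ctx. pose proof (PSeries_continuity Y 0 cy) as cty.
  destruct (ctx eps heps) as [ax [hax Hx]]. destruct (cty eps heps) as [ay [hay Hy]].
  rewrite PSeries_0 in Hx, Hy. 
  exists (Rmin (/ Rr) (Rmin ax ay)). split.
  { apply Rmin_pos; [lra|apply Rmin_pos; lra]. }
  exists X, Y. split; [reflexivity|]. split; [reflexivity|].
  intros u hu.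
  assert (hu1 : Rabs u < / Rr) by (eapply Rlt_le_trans; [exact hu|apply Rmin_l]).
  assert (hu2 : Rabs u < ax) by (eapply Rlt_le_trans; [exact hu|eapply Rle_trans; [apply Rmin_r|apply Rmin_l]]).
  assert (hu3 : Rabs u < ay) by (eapply Rlt_le_trans; [exact hu|eapply Rle_trans; [apply Rmin_r|apply Rmin_r]]).
  destruct (CV u hu1) as [k1 [k2 [k3 [k4 [k5 [k6 [k7 k8]]]]]]].
  assert (sX := PSeries_correct X u (CV_radius_inside _ _ k1)).
  assert (sY := PSeries_correct Y u (CV_radius_inside _ _ k5)).
  set (x := PSeries X u) in *. set (y := PSeries Y u) in *.
  assert (s2X := is_pseries_mult X X u x x sX sX k1 k1).
  assert (s3X := is_pseries_mult X (pw2 X) u x (x * x) sX s2X k1 k2).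
  assert (s4X := is_pseries_mult X (pw3 X) u x (x * (x * x)) sX s3X k1 k3).
  assert (s2Y := is_pseries_mult Y Y u y y sY sY k5 k5).
  assert (s3Y := is_pseries_mult Y (pw2 Y) u y (y * y) sY s2Y k5 k6).
  assert (s4Y := is_pseries_mult Y (pw3 Y) u y (y * (y * y)) sY s3Y k5 k7).
  assert (R1 := rowc_series c1 X Y u _ _ _ _ _ _ _ _ sX sY s2X s3X s4X s2Y s3Y s4Y).
  assert (R2 := rowc_series c2 X Y u _ _ _ _ _ _ _ _ sX sY s2X s3X s4X s2Y s3Y s4Y).
  assert (E1 : is_pseries X u (rowv c1 u x y)).
  { match type of R1 with is_pseries _ _ ?v => replace (rowv c1 u x y) with v by (unfold rowv; ring) end.
    eapply is_pseries_ext; [|exact R1]. intro n. symmetry. apply (SXY_rec c1 c2 n). }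
  assert (E2 : is_pseries Y u (rowv c2 u x y)).
  { match type of R2 with is_pseries _ _ ?v => replace (rowv c2 u x y) with v by (unfold rowv; ring) end.
    eapply is_pseries_ext; [|exact R2]. intro n. symmetry. apply (SXY_rec c1 c2 n). }
  split; [exact sX|]. split; [exact sY|].
  split.
  { destruct (Req_dec u 0) as [->|nu].
    - unfold x. rewrite PSeries_0. unfold X. rewrite SX_0, Rabs_R0. lra.
    - replace (Rabs x) with (R_dist (PSeries X u) (X 0%nat))
        by (unfold R_dist; unfold X; rewrite SX_0, Rminus_0_r; reflexivity).
      apply Hx. split; [split; [exact I|auto]|]. simpl; unfold R_dist; rewrite Rminus_0_r; exact hu2. }
  split.
  { destruct (Req_dec u 0) as [->|nu].
    - unfold y. rewrite PSeries_0. unfold Y. rewrite SY_0, Rabs_R0. lra.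
    - replace (Rabs y) with (R_dist (PSeries Y u) (Y 0%nat))
        by (unfold R_dist; unfold Y; rewrite SY_0, Rminus_0_r; reflexivity).
      apply Hy. split; [split; [exact I|auto]|]. simpl; unfold R_dist; rewrite Rminus_0_r; exact hu3. }
  split; [unfold x at 1; apply is_pseries_unique; exact E1|unfold y at 1; apply is_pseries_unique; exact E2].
Qed.

Definition G1 (e sg l a s : R) := - l * (a - s) + e * sg * s^4 - 2 * e * sg * a^4.
Definition G2 (e sg Qb l a s : R) := - l * (s - a) - sg * s^4 + e * sg * a^4 + Qb.

Definition J11 e sg l a (s : R) := - l - 8 * e * sg * a^3.
Definition J12 e sg l (a : R) s := l + 4 * e * sg * s^3.
Definition J21 e sg l a (s : R) := l + 4 * e * sg * a^3.
Definition J22 (e : R) sg l (a : R) s := - l - 4 * sg * s^3.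
Definition Dlt e sg l a s := J11 e sg l a s * J22 e sg l a s - J12 e sg l a s * J21 e sg l a s.

Definition V1 e sg a s (u x y : R) := u * (s - a) + u * (- x + y)
  + (-12 * e * sg * a^2 * x^2 + -8 * e * sg * a * x^3 + -2 * e * sg * x^4)
  + (6 * e * sg * s^2 * y^2 + 4 * e * sg * s * y^3 + e * sg * y^4).
Definition V2 e sg a s (u x y : R) := u * (a - s) + u * (x - y)
  + (6 * e * sg * a^2 * x^2 + 4 * e * sg * a * x^3 + e * sg * x^4)
  + (-6 * sg * s^2 * y^2 + -4 * sg * s * y^3 + - sg * y^4).

Lemma G1_exp e sg l a s u x y : G1 e sg (l + u) (a + x) (s + y) =
  G1 e sg l a s + J11 e sg l a s * x + J12 e sg l a s * y + V1 e sg a s u x y.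
Proof. unfold G1, J11, J12, V1. ring. Qed.
Lemma G2_exp e sg Qb l a s u x y : G2 e sg Qb (l + u) (a + x) (s + y) =
  G2 e sg Qb l a s + J21 e sg l a s * x + J22 e sg l a s * y + V2 e sg a s u x y.
Proof. unfold G2, J21, J22, V2. ring. Qed.

Definition mkc (j1 j2 D : R) (k1 k2 : R) := - (j1 * k1 - j2 * k2) / D.

Definition cA e sg l a s : prm :=
  let j22 := J22 e sg l a s in let j12 := J12 e sg l a s in let D := Dlt e sg l a s in
  mkprm (mkc j22 j12 D (s - a) (a - s)) (mkc j22 j12 D (-1) 1) (mkc j22 j12 D 1 (-1))
        (mkc j22 j12 D (-12 * e * sg * a^2) (6 * e * sg * a^2))
        (mkc j22 j12 D (-8 * e * sg * a) (4 * e * sg * a))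
        (mkc j22 j12 D (-2 * e * sg) (e * sg))
        (mkc j22 j12 D (6 * e * sg * s^2) (-6 * sg * s^2))
        (mkc j22 j12 D (4 * e * sg * s) (-4 * sg * s))
        (mkc j22 j12 D (e * sg) (- sg)).
Definition cB e sg l a s : prm :=
  let j11 := J11 e sg l a s in let j21 := J21 e sg l a s in let D := Dlt e sg l a s in
  mkprm (mkc j11 j21 D (a - s) (s - a)) (mkc j11 j21 D 1 (-1)) (mkc j11 j21 D (-1) 1)
        (mkc j11 j21 D (6 * e * sg * a^2) (-12 * e * sg * a^2))
        (mkc j11 j21 D (4 * e * sg * a) (-8 * e * sg * a))
        (mkc j11 j21 D (e * sg) (-2 * e * sg))
        (mkc j11 j21 D (-6 * sg * s^2) (6 * e * sg * s^2))
        (mkc j11 j21 D (-4 * sg * s) (4 * e * sg * s))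
        (mkc j11 j21 D (- sg) (e * sg)).

Lemma rowv_A e sg l a s u x y : Dlt e sg l a s <> 0 ->
  rowv (cA e sg l a s) u x y = - (J22 e sg l a s * V1 e sg a s u x y - J12 e sg l a s * V2 e sg a s u x y) / Dlt e sg l a s.
Proof. intros hD. unfold rowv, cA, mkc, V1, V2; simpl. field. auto. Qed.
Lemma rowv_B e sg l a s u x y : Dlt e sg l a s <> 0 ->
  rowv (cB e sg l a s) u x y = - (J11 e sg l a s * V2 e sg a s u x y - J21 e sg l a s * V1 e sg a s u x y) / Dlt e sg l a s.
Proof. intros hD. unfold rowv, cB, mkc, V1, V2; simpl. field. auto. Qed.

Lemma local_analytic e sg Qb l a s : G1 e sg l a s = 0 -> G2 e sg Qb l a s = 0 ->
  Dlt e sg l a s <> 0 -> forall eps, 0 < eps -> exists r, 0 < r /\ exists X Y : nat -> R,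
  X 0%nat = 0 /\ Y 0%nat = 0 /\ forall u, Rabs u < r ->
  is_pseries X u (PSeries X u) /\ is_pseries Y u (PSeries Y u) /\
  Rabs (PSeries X u) < eps /\ Rabs (PSeries Y u) < eps /\
  G1 e sg (l + u) (a + PSeries X u) (s + PSeries Y u) = 0 /\
  G2 e sg Qb (l + u) (a + PSeries X u) (s + PSeries Y u) = 0.
Proof.
  intros h1 h2 hD eps heps.
  destruct (ps_fix (cA e sg l a s) (cB e sg l a s) eps heps) as [r [hr [X [Y [hX0 [hY0 H]]]]]].
  exists r. split; auto. exists X, Y. split; auto. split; auto.
  intros u hu. destruct (H u hu) as [k1 [k2 [k3 [k4 [k5 k6]]]]].
  repeat split; auto.
  - rewrite G1_exp, h1. set (x := PSeries X u) in *. set (y := PSeries Y u) in *.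
    rewrite rowv_A in k5 by auto. rewrite rowv_B in k6 by auto.
    remember (V1 e sg a s u x y) as w1. remember (V2 e sg a s u x y) as w2.
    clear Heqw1 Heqw2. clearbody x y. rewrite k5, k6. unfold Dlt in *. field. auto.
  - rewrite G2_exp, h2. set (x := PSeries X u) in *. set (y := PSeries Y u) in *.
    rewrite rowv_A in k5 by auto. rewrite rowv_B in k6 by auto.
    remember (V1 e sg a s u x y) as w1. remember (V2 e sg a s u x y) as w2.
    clear Heqw1 Heqw2. clearbody x y. rewrite k5, k6. unfold Dlt in *. field. auto.
Qed.

Lemma a_lt_s e sg l a s : 0 < e -> 0 < sg -> 0 <= l -> 0 < a -> 0 < s ->
  G1 e sg l a s = 0 -> a < s.
Proof.
  intros he hs hl ha hss g1. unfold G1 in g1.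
  destruct (Rlt_or_le a s) as [h|h]; auto. exfalso.
  assert (s^4 <= a^4) by (apply pow_incr; lra).
  assert (0 < s^4) by (apply pow_lt; lra).
  assert (0 < e * sg) by nra.
  assert (l * (a - s) >= 0) by nra.
  nra.
Qed.

Lemma two_a4 e sg l a s : 0 < e -> 0 < sg -> 0 <= l -> 0 < a -> 0 < s ->
  G1 e sg l a s = 0 -> s^4 <= 2 * a^4.
Proof.
  intros he hs hl ha hss g1. pose proof (a_lt_s e sg l a s he hs hl ha hss g1).
  unfold G1 in g1. assert (0 < e * sg) by nra. assert (l * (s - a) >= 0) by nra. nra.
Qed.

Lemma s3_le e sg l a s : 0 < e -> 0 < sg -> 0 <= l -> 0 < a -> 0 < s ->
  G1 e sg l a s = 0 -> s^3 <= 2 * a^3.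
Proof.
  intros he hs hl ha hss g1. pose proof (a_lt_s e sg l a s he hs hl ha hss g1).
  pose proof (two_a4 e sg l a s he hs hl ha hss g1).
  destruct (Rle_or_lt (s^3) (2 * a^3)) as [h|h]; auto. exfalso.
  assert (0 < a^3) by (apply pow_lt; lra).
  assert (s * s^3 > s * (2 * a^3)) by (apply Rmult_lt_compat_l; lra).
  assert (s * (2 * a^3) > a * (2 * a^3)) by (apply Rmult_lt_compat_r; lra).
  replace (s^4) with (s * s^3) in * by ring. replace (a^4) with (a * a^3) in * by ring. lra.
Qed.

Lemma Dlt_pos e sg l a s : 0 < e < 2 -> 0 < sg -> 0 <= l -> 0 < a -> 0 < s ->
  G1 e sg l a s = 0 -> 0 < Dlt e sg l a s.
Proof.
  intros he hs hl ha hss g1.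
  pose proof (s3_le e sg l a s ltac:(lra) hs hl ha hss g1) as h3.
  assert (E : Dlt e sg l a s = 4 * l * sg * ((1 - e) * s^3 + e * a^3) + 16 * e * sg^2 * (2 - e) * a^3 * s^3)
    by (unfold Dlt, J11, J12, J21, J22; ring).
  rewrite E.
  assert (0 < a^3) by (apply pow_lt; lra). assert (0 < s^3) by (apply pow_lt; lra).
  assert (0 <= (1 - e) * s^3 + e * a^3).
  { destruct (Rle_or_lt e 1). nra. nra. }
  assert (0 <= 4 * l * sg * ((1 - e) * s^3 + e * a^3)).
  { apply Rmult_le_pos; [nra|auto]. }
  assert (0 < e * sg^2 * (2 - e)).
  { apply Rmult_lt_0_compat; [apply Rmult_lt_0_compat; [lra|nra]|lra]. }
  assert (0 < e * sg^2 * (2 - e) * a^3 * s^3) by (apply Rmult_lt_0_compat; [apply Rmult_lt_0_compat|]; lra).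
  nra.
Qed.

Definition wt e t := 1 - e + e * t^4.
Definition phi e t := (2*t^4 - 1)^4 / ((1-t)^4 * (wt e t)^3).
Definition dphi e t := (2*t^4 - 1)^3 *
  (32 * t^3 * (1 - t) * wt e t + 4 * (2*t^4 - 1) * wt e t - 12 * e * t^3 * (2*t^4 - 1) * (1 - t))
  / ((1-t)^5 * (wt e t)^4).

Lemma phi_derive e t : t < 1 -> 0 < wt e t -> is_derive (phi e) t (dphi e t).
Proof.
  intros h1 h2. unfold phi, dphi. unfold wt in *.
  assert (e4 : t * (t * (t * (t * 1))) = t^4) by ring.
  assert (w0 : 1 - e + e * t^4 <> 0) by lra. assert (t0 : 1 + - t <> 0) by lra.
  auto_derive.
  - rewrite ?e4. repeat apply Rmult_integral_contrapositive_currified; auto; lra.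
  - rewrite ?e4. field. split; lra.
Qed.

Lemma pow4_lt x y : 0 <= x -> x < y -> x^4 < y^4.
Proof.
  intros hx hxy. replace (y^4 - x^4) with ((y - x) * ((y + x) * (y^2 + x^2))) by ring.
  assert (0 < y^2) by (apply pow_lt; lra). assert (0 <= x^2) by (apply pow2_ge_0).
  assert (0 < (y - x) * ((y + x) * (y^2 + x^2))) by (repeat apply Rmult_lt_0_compat; lra).
  lra.
Qed.

Lemma wt_pos e t : 0 < e < 2 -> 1 <= 2 * t^4 -> 0 < wt e t.
Proof. intros he ht. unfold wt. nra. Qed.

Lemma dphi_pos e t : 0 < e < 2 -> 0 < t -> 1 < 2 * t^4 -> t < 1 -> 0 < dphi e t.
Proof.
  intros he ht0 ht ht1. pose proof (wt_pos e t he ltac:(lra)) as hw. unfold dphi.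
  assert (E : 32 * t^3 * (1 - t) * wt e t + 4 * (2*t^4 - 1) * wt e t - 12 * e * t^3 * (2*t^4 - 1) * (1 - t)
     = 4 * t^3 * (1 - t) * (8 - 5 * e + 2 * e * t^4) + 4 * (2*t^4 - 1) * wt e t) by (unfold wt; ring).
  rewrite E.
  assert (0 < t^3) by (apply pow_lt; lra).
  assert (0 < 8 - 5 * e + 2 * e * t^4) by nra.
  assert (0 < 4 * t^3 * (1 - t) * (8 - 5 * e + 2 * e * t^4)).
  { repeat apply Rmult_lt_0_compat; lra. }
  assert (0 < 4 * (2*t^4 - 1) * wt e t) by (repeat apply Rmult_lt_0_compat; lra).
  apply Rdiv_lt_0_compat.
  - apply Rmult_lt_0_compat; [apply pow_lt; lra|lra].
  - apply Rmult_lt_0_compat; apply pow_lt; lra.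
Qed.

Lemma phi_zero e t : 2 * t^4 = 1 -> phi e t = 0.
Proof. intros h. unfold phi. replace (2 * t^4 - 1) with 0 by lra. simpl. rewrite !Rmult_0_l. unfold Rdiv. ring. Qed.

Lemma phi_pos e t : 0 < e < 2 -> 1 < 2 * t^4 -> t < 1 -> 0 < phi e t.
Proof.
  intros he ht ht1. pose proof (wt_pos e t he ltac:(lra)). unfold phi.
  apply Rdiv_lt_0_compat; [apply pow_lt; lra|apply Rmult_lt_0_compat; apply pow_lt; lra].
Qed.

Lemma phi_incr e t1 t2 : 0 < e < 2 -> 0 < t1 -> 1 <= 2 * t1^4 -> t1 < t2 -> t2 < 1 ->
  phi e t1 < phi e t2.
Proof.
  intros he ht1 h1 h12 h2.
  assert (mono : forall x y, 0 < x -> x <= y -> x^4 <= y^4) by (intros; apply pow_incr; lra).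
  assert (h2b : 1 < 2 * t2^4).
  { assert (t1^4 < t2^4) by (apply pow4_lt; lra). lra. }
  destruct (Req_dec (2 * t1^4) 1) as [eq|ne].
  - rewrite phi_zero by auto. apply phi_pos; auto.
  - assert (h1s : 1 < 2 * t1^4) by lra.
    destruct (MVT_gen (phi e) t1 t2 (dphi e)) as [c [hc E]].
    + intros x hx. rewrite Rmin_left, Rmax_right in hx by lra.
      apply phi_derive; [lra|]. apply wt_pos; auto. pose proof (mono t1 x ht1 ltac:(lra)). lra.
    + intros x hx. rewrite Rmin_left, Rmax_right in hx by lra.
      apply derivable_continuous_pt. apply ex_derive_Reals_0. eexists.
      apply phi_derive; [lra|]. apply wt_pos; auto. pose proof (mono t1 x ht1 ltac:(lra)). lra.
    + rewrite Rmin_left, Rmax_right in hc by lra.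
      assert (0 < dphi e c).
      { apply dphi_pos; auto; try lra. pose proof (mono t1 c ht1 ltac:(lra)). lra. }
      assert (0 < dphi e c * (t2 - t1)) by (apply Rmult_lt_0_compat; lra). lra.
Qed.

Lemma key_rel e sg Qb l a s : 0 < e < 2 -> 0 < sg -> 0 < Qb -> 0 <= l -> 0 < a -> 0 < s ->
  G1 e sg l a s = 0 -> G2 e sg Qb l a s = 0 ->
  0 < a / s /\ 1 <= 2 * (a / s)^4 /\ a / s < 1 /\
  l^4 = e^4 * sg * Qb^3 * phi e (a / s) /\ s^4 * wt e (a / s) = Qb / sg.
Proof.
  intros he hs hQ hl ha hss g1 g2.
  pose proof (a_lt_s e sg l a s ltac:(lra) hs hl ha hss g1) as hlt.
  pose proof (two_a4 e sg l a s ltac:(lra) hs hl ha hss g1) as h24.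
  set (t := a / s).
  assert (ht : a = t * s) by (unfold t; field; lra).
  assert (ht0 : 0 < t) by (unfold t; apply Rdiv_lt_0_compat; lra).
  assert (ht1 : t < 1).
  { unfold t. apply (Rmult_lt_reg_r s); [lra|]. unfold Rdiv. rewrite Rmult_assoc, Rinv_l by lra. lra. }
  assert (s4 : 0 < s^4) by (apply pow_lt; lra).
  assert (ht2 : 1 <= 2 * t^4).
  { rewrite ht in h24. replace ((t * s)^4) with (t^4 * s^4) in h24 by ring.
    apply (Rmult_le_reg_r (s^4)); [lra|]. nra. }
  unfold G1, G2 in *. rewrite ht in g1, g2.
  assert (H1 : l * (1 - t) = e * sg * s^3 * (2 * t^4 - 1)).
  { apply (Rmult_eq_reg_l s); [|lra]. nra. }
  assert (H2 : s^4 * wt e t = Qb / sg).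
  { unfold wt. apply (Rmult_eq_reg_l sg); [|lra]. field_simplify; [|lra]. nra. }
  assert (hw : 0 < wt e t) by (apply wt_pos; lra).
  repeat split; auto.
  assert (L : l^4 = (e * sg * s^3 * (2 * t^4 - 1))^4 / (1 - t)^4).
  { rewrite <- H1. field. lra. }
  rewrite L. replace ((e * sg * s ^ 3 * (2 * t ^ 4 - 1)) ^ 4) with
    ((e * sg) ^4 * (s^4)^3 * (2 * t ^ 4 - 1) ^ 4) by ring.
  replace (s^4) with (Qb / sg / wt e t) by (rewrite <- H2; field; lra).
  unfold phi. field. repeat split; lra.
Qed.

Lemma pow4_le_inv x y : 0 <= x -> 0 <= y -> x^4 <= y^4 -> x <= y.
Proof. intros hx hy h. destruct (Rle_or_lt x y) as [h'|h']; auto.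
  pose proof (pow4_lt y x hy h'). lra. Qed.
Lemma pow4_lt_inv x y : 0 <= x -> 0 <= y -> x^4 < y^4 -> x < y.
Proof. intros hx hy h. destruct (Rlt_or_le x y) as [h'|h']; auto.
  assert (y^4 <= x^4) by (apply pow_incr; lra). lra. Qed.

Lemma t_order e sg Qb l a s l' a' s' : 0 < e < 2 -> 0 < sg -> 0 < Qb -> 0 <= l -> l <= l' ->
  0 < a -> 0 < s -> 0 < a' -> 0 < s' ->
  G1 e sg l a s = 0 -> G2 e sg Qb l a s = 0 -> G1 e sg l' a' s' = 0 -> G2 e sg Qb l' a' s' = 0 ->
  (l = l' -> a / s = a' / s') /\ (l < l' -> a / s < a' / s').
Proof.
  intros he hs hQ hl hll ha hss ha' hss' g1 g2 g1' g2'.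
  destruct (key_rel e sg Qb l a s he hs hQ hl ha hss g1 g2) as [t0 [t1 [t2 [t3 t4]]]].
  destruct (key_rel e sg Qb l' a' s' he hs hQ ltac:(lra) ha' hss' g1' g2') as [u0 [u1 [u2 [u3 u4]]]].
  set (t := a / s) in *. set (t' := a' / s') in *.
  set (KK := e ^ 4 * sg * Qb ^ 3) in *.
  assert (hK : 0 < KK) by (unfold KK; repeat apply Rmult_lt_0_compat; try apply pow_lt; lra).
  split.
  - intros ->. assert (phi e t = phi e t').
    { apply (Rmult_eq_reg_l KK); [|lra]. lra. }
    destruct (Rtotal_order t t') as [h|[h|h]]; auto.
    + pose proof (phi_incr e t t' he t0 t1 h u2). lra.
    + pose proof (phi_incr e t' t he u0 u1 h t2). lra.
  - intros hlt. assert (l^4 < l'^4) by (apply pow4_lt; lra).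
    assert (phi e t < phi e t').
    { apply (Rmult_lt_reg_l KK); [lra|]. lra. }
    destruct (Rtotal_order t t') as [h|[h|h]]; auto.
    + rewrite h in *. lra.
    + pose proof (phi_incr e t' t he u0 u1 h t2). lra.
Qed.

Lemma sol_from_t e sg Qb l a s l' a' s' : 0 < e < 2 -> 0 < sg -> 0 < Qb -> 0 <= l -> 0 <= l' ->
  0 < a -> 0 < s -> 0 < a' -> 0 < s' ->
  G1 e sg l a s = 0 -> G2 e sg Qb l a s = 0 -> G1 e sg l' a' s' = 0 -> G2 e sg Qb l' a' s' = 0 ->
  (a / s = a' / s' -> a = a' /\ s = s') /\
  (a / s < a' / s' -> s' < s /\ (e < 1 -> a < a') /\ (1 < e -> a' < a)).
Proof.
  intros he hs hQ hl hl' ha hss ha' hss' g1 g2 g1' g2'.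
  destruct (key_rel e sg Qb l a s he hs hQ hl ha hss g1 g2) as [t0 [t1 [t2 [t3 t4]]]].
  destruct (key_rel e sg Qb l' a' s' he hs hQ hl' ha' hss' g1' g2') as [u0 [u1 [u2 [u3 u4]]]].
  set (t := a / s) in *. set (t' := a' / s') in *.
  assert (ea : a = t * s) by (unfold t; field; lra).
  assert (ea' : a' = t' * s') by (unfold t'; field; lra).
  assert (hw : 0 < wt e t) by (apply wt_pos; lra).
  assert (hw' : 0 < wt e t') by (apply wt_pos; lra).
  set (K := Qb / sg) in *. assert (hK : 0 < K) by (unfold K; apply Rdiv_lt_0_compat; lra).
  assert (S4 : s^4 = K / wt e t) by (rewrite <- t4; field; lra).
  assert (S4' : s'^4 = K / wt e t') by (rewrite <- u4; field; lra).
  assert (A4 : a^4 = K * t^4 / wt e t) by (rewrite ea; replace ((t*s)^4) with (t^4 * s^4) by ring; rewrite S4; field; lra).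
  assert (A4' : a'^4 = K * t'^4 / wt e t') by (rewrite ea'; replace ((t'*s')^4) with (t'^4 * s'^4) by ring; rewrite S4'; field; lra).
  split.
  - intros h. rewrite <- h in S4', A4'.
    split; apply Rle_antisym; apply pow4_le_inv; lra.
  - intros h. assert (hT : t^4 < t'^4) by (apply pow4_lt; lra).
    assert (hww : wt e t < wt e t') by (unfold wt; nra).
    split.
    + apply pow4_lt_inv; try lra. rewrite S4, S4'.
      apply Rmult_lt_compat_l; [lra|]. apply Rinv_lt_contravar; [nra|lra].
    + assert (D : K * t'^4 / wt e t' - K * t^4 / wt e t = K * (1 - e) * (t'^4 - t^4) / (wt e t * wt e t'))
        by (unfold wt in *; field; split; lra).
      assert (hpos : 0 < K * (t'^4 - t^4) / (wt e t * wt e t'))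
        by (apply Rdiv_lt_0_compat; [apply Rmult_lt_0_compat; lra|nra]).
      split; intros he1.
      * apply pow4_lt_inv; try lra. rewrite A4, A4'.
        assert (K * (1 - e) * (t'^4 - t^4) / (wt e t * wt e t') = (1 - e) * (K * (t'^4 - t^4) / (wt e t * wt e t')))
          by (field; lra).
        assert (0 < (1 - e) * (K * (t'^4 - t^4) / (wt e t * wt e t'))) by (apply Rmult_lt_0_compat; lra).
        lra.
      * apply pow4_lt_inv; try lra. rewrite A4, A4'.
        assert (K * (1 - e) * (t'^4 - t^4) / (wt e t * wt e t') = (1 - e) * (K * (t'^4 - t^4) / (wt e t * wt e t')))
          by (field; lra).
        assert (0 < (e - 1) * (K * (t'^4 - t^4) / (wt e t * wt e t'))) by (apply Rmult_lt_0_compat; lra).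
        lra.
Qed.

Lemma cont_of_derive (h dh : R -> R) x : is_derive h x (dh x) ->
  forall d, 0 < d -> exists nu, 0 < nu /\ forall t, Rabs (t - x) < nu -> Rabs (h t - h x) < d.
Proof.
  intros hd d hdpos.
  assert (c : continuity_pt h x).
  { apply derivable_continuous_pt. apply ex_derive_Reals_0. eexists; eauto. }
  destruct (c d hdpos) as [nu [hnu H]].
  exists nu. split; auto. intros t ht.
  destruct (Req_dec t x) as [->|ne].
  - rewrite Rminus_diag, Rabs_R0. auto.
  - apply H. split; [split; [exact I|auto]|exact ht].
Qed.

Lemma nonincr (h dh : R -> R) p q : p < q ->
  (forall t, p <= t <= q -> is_derive h t (dh t)) ->
  (forall t, p <= t <= q -> dh t <= 0) -> h q <= h p.
Proof.
  intros hpq hd hneg.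
  destruct (MVT_gen h p q dh) as [c [hc E]].
  - intros x hx. rewrite Rmin_left, Rmax_right in hx by lra. apply hd; lra.
  - intros x hx. rewrite Rmin_left, Rmax_right in hx by lra.
    apply derivable_continuous_pt. apply ex_derive_Reals_0. eexists; apply hd; lra.
  - rewrite Rmin_left, Rmax_right in hc by lra.
    assert (dh c * (q - p) <= 0).
    { apply Rmult_le_0_r; [apply hneg; lra|lra]. }
    lra.
Qed.

Lemma barrier (h dh : R -> R) (T eta : R) :
  0 < eta ->
  (forall t, 0 < t < T -> is_derive h t (dh t)) ->
  (forall d, 0 < d -> exists nu, 0 < nu /\ forall t, 0 < t < nu -> Rabs (h t - h 0) < d) ->
  (forall t, 0 < t < T -> h t < eta -> dh t <= 0) ->
  h 0 <= 0 -> forall t, 0 <= t < T -> h t <= 0.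
Proof.
  intros heta hd hrc hneg h0 t1 ht1.
  destruct (Rle_or_lt (h t1) 0) as [ok|bad]; auto. exfalso.
  assert (t1pos : 0 < t1) by (destruct (Req_dec t1 0) as [->|]; lra).
  set (E := fun t => 0 <= t <= t1 /\ h t <= 0).
  assert (bE : bound E) by (exists t1; intros x [hx _]; lra).
  assert (nE : exists x, E x) by (exists 0; split; lra).
  destruct (completeness E bE nE) as [tau [ub lub]].
  assert (t0 : 0 <= tau) by (apply ub; split; lra).
  assert (tt1 : tau <= t1) by (apply lub; intros x [hx _]; lra).
  assert (RC : forall d, 0 < d -> exists nu, 0 < nu /\ forall t, tau < t < tau + nu -> Rabs (h t - h tau) < d).
  { intros d hdp. destruct (Req_dec tau 0) as [e0|ne0].
    - rewrite e0. destruct (hrc d hdp) as [nu [hnu H]]. exists nu. split; auto.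
      intros t ht. apply H. lra.
    - destruct (cont_of_derive h dh tau (hd tau ltac:(lra)) d hdp) as [nu [hnu H]].
      exists nu. split; auto. intros t ht. apply H. rewrite Rabs_pos_eq; lra. }
  assert (htau : h tau <= 0).
  { destruct (Rle_or_lt (h tau) 0) as [ok|pos]; auto. exfalso.
    destruct (Req_dec tau 0) as [e0|ne0]. { rewrite e0 in pos. lra. }
    destruct (cont_of_derive h dh tau (hd tau ltac:(lra)) (h tau) pos) as [nu [hnu H]].
    assert (tau <= tau - nu / 2).
    { apply lub. intros x [hx hhx].
      destruct (Rle_or_lt x (tau - nu / 2)) as [l|l]; auto.
      assert (x <= tau) by (apply ub; split; auto).
      assert (Rabs (h x - h tau) < h tau) by (apply H; rewrite Rabs_left1; lra).
      rewrite Rabs_left1 in H1 by lra. lra. }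
    lra. }
  assert (tlt : tau < t1) by (destruct (Req_dec tau t1) as [->|]; lra).
  destruct (RC (eta - h tau) ltac:(lra)) as [nu [hnu H]].
  set (t2 := Rmin (tau + nu / 2) t1).
  assert (ht2a : tau < t2) by (unfold t2; apply Rmin_glb_lt; lra).
  assert (ht2b : t2 <= t1) by (unfold t2; apply Rmin_r).
  assert (ht2c : t2 <= tau + nu / 2) by (unfold t2; apply Rmin_l).
  assert (below : forall t, tau < t <= t2 -> h t < eta).
  { intros t ht. assert (Rabs (h t - h tau) < eta - h tau) by (apply H; lra).
    apply Rabs_def2 in H0. lra. }
  assert (mono : forall tp, tau < tp < t2 -> h t2 <= h tp).
  { intros tp htp. apply (nonincr h dh tp t2); try lra.
    - intros t ht. apply hd; lra.
    - intros t ht. apply hneg; [lra|]. apply below; lra. }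
  assert (ht2 : h t2 <= h tau).
  { destruct (Rle_or_lt (h t2) (h tau)) as [ok|gt]; auto. exfalso.
    destruct (RC (h t2 - h tau) ltac:(lra)) as [nu' [hnu' H']].
    set (tp := Rmin (tau + nu' / 2) ((tau + t2) / 2)).
    assert (tp1 : tau < tp) by (unfold tp; apply Rmin_glb_lt; lra).
    assert (tp2 : tp <= (tau + t2) / 2) by (unfold tp; apply Rmin_r).
    assert (tp3 : tp <= tau + nu' / 2) by (unfold tp; apply Rmin_l).
    assert (Rabs (h tp - h tau) < h t2 - h tau) by (apply H'; lra).
    apply Rabs_def2 in H0. pose proof (mono tp ltac:(lra)). lra. }
  assert (t2 <= tau) by (apply ub; split; lra).
  lra.
Qed.

Lemma rc_of_filterlim (h : R -> R) : filterlim h (at_right 0) (locally (h 0)) ->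
  forall d, 0 < d -> exists nu, 0 < nu /\ forall t, 0 < t < nu -> Rabs (h t - h 0) < d.
Proof.
  intros H d hd.
  assert (L : locally (h 0) (fun y => Rabs (y - h 0) < d)).
  { exists (mkposreal d hd). intros y hy. exact hy. }
  destruct (H _ L) as [nu Hnu].
  exists nu. split; [apply cond_pos|]. intros t ht. apply Hnu; [|lra].
  unfold ball; simpl. unfold AbsRing_ball; simpl. change (Rabs (t - 0) < nu).
  rewrite Rminus_0_r, Rabs_pos_eq; lra.
Qed.

Lemma cont_R (g : R -> R) x : (forall y, ex_derive g y) -> continuous g x.
Proof. intros H. exact (ex_derive_continuous (K:=R_AbsRing) (V:=R_NormedModule) g x (H x)). Qed.

Lemma rc_comp (f g : R -> R) : filterlim f (at_right 0) (locally (f 0)) ->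
  (forall y, ex_derive g y) -> filterlim (fun t => g (f t)) (at_right 0) (locally (g (f 0))).
Proof. intros hf hg. eapply filterlim_comp; [exact hf|]. apply cont_R; auto. Qed.

Lemma rc_plus (f g : R -> R) : filterlim f (at_right 0) (locally (f 0)) ->
  filterlim g (at_right 0) (locally (g 0)) ->
  filterlim (fun t => f t + g t) (at_right 0) (locally (f 0 + g 0)).
Proof. intros hf hg. eapply filterlim_comp_2; [exact hf|exact hg|]. apply (filterlim_plus (f 0) (g 0)). Qed.

Lemma rc_mult (f g : R -> R) : filterlim f (at_right 0) (locally (f 0)) ->
  filterlim g (at_right 0) (locally (g 0)) ->
  filterlim (fun t => f t * g t) (at_right 0) (locally (f 0 * g 0)).
Proof. intros hf hg. eapply filterlim_comp_2; [exact hf|exact hg|]. apply (filterlim_mult (f 0) (g 0)). Qed.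

Lemma rc_id_fun (g : R -> R) : (forall y, ex_derive g y) -> filterlim g (at_right 0) (locally (g 0)).
Proof. intros hg. eapply filterlim_filter_le_1; [apply filter_le_within|]. apply cont_R; auto. Qed.

Lemma ode_decay (ga gs w1 w2 c rho as0 ss0 T : R) (F1 F2 : R -> R -> R) (xa xs : R -> R) :
  0 < ga -> 0 < gs -> 0 < w1 -> 0 < w2 -> 0 < c -> 0 < rho ->
  (forall x y, x^2 + y^2 < rho^2 -> 2*w1*x*F1 x y + 2*w2*y*F2 x y <= - c * (x^2 + y^2)) ->
  filterlim xa (at_right 0) (locally (xa 0)) -> filterlim xs (at_right 0) (locally (xs 0)) ->
  (forall t, 0 < t < T -> is_derive xa t (F1 (xa t - as0) (xs t - ss0) / ga) /\
                         is_derive xs t (F2 (xa t - as0) (xs t - ss0) / gs)) ->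
  ga*w1*(xa 0 - as0)^2 + gs*w2*(xs 0 - ss0)^2 < Rmin (ga*w1) (gs*w2) * rho^2 ->
  forall t, 0 <= t < T ->
   ga*w1*(xa t - as0)^2 + gs*w2*(xs t - ss0)^2 <=
   (ga*w1*(xa 0 - as0)^2 + gs*w2*(xs 0 - ss0)^2) * exp (- (c / (ga*w1 + gs*w2)) * t).
Proof.
  intros hga hgs hw1 hw2 hc hrho Hly hra hrs hder hV0.
  set (V := fun t => ga*w1*(xa t - as0)^2 + gs*w2*(xs t - ss0)^2).
  set (k := c / (ga*w1 + gs*w2)).
  assert (hk : 0 < k) by (unfold k; apply Rdiv_lt_0_compat; nra).
  set (m := Rmin (ga*w1) (gs*w2)).
  set (h := fun t => V t * exp (k * t) - V 0).
  set (dh := fun t => exp (k * t) * (2 * w1 * (xa t - as0) * F1 (xa t - as0) (xs t - ss0)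
                     + 2 * w2 * (xs t - ss0) * F2 (xa t - as0) (xs t - ss0) + k * V t)).
  assert (Hd : forall t, 0 < t < T -> is_derive h t (dh t)).
  { intros t ht. destruct (hder t ht) as [d1 d2].
    assert (D1 : Derive xa t = F1 (xa t - as0) (xs t - ss0) / ga) by (apply is_derive_unique; auto).
    assert (D2 : Derive xs t = F2 (xa t - as0) (xs t - ss0) / gs) by (apply is_derive_unique; auto).
    unfold h, V, dh. auto_derive.
    - repeat split; eexists; eauto.
    - change (Derive (fun x : R => xa x) t) with (Derive xa t).
      change (Derive (fun x : R => xs x) t) with (Derive xs t).
      rewrite D1, D2. unfold V. field. lra. }
  assert (Hrc : filterlim h (at_right 0) (locally (h 0))).
  { unfold h. apply (rc_plus (fun t => V t * exp (k * t)) (fun _ => - V 0)).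
    - apply (rc_mult V (fun t => exp (k * t))).
      + unfold V. apply (rc_plus (fun t => ga * w1 * (xa t - as0) ^ 2) (fun t => gs * w2 * (xs t - ss0) ^ 2)).
        * apply (rc_comp xa (fun p => ga * w1 * (p - as0)^2)); auto. intros; auto_derive; auto.
        * apply (rc_comp xs (fun p => gs * w2 * (p - ss0)^2)); auto. intros; auto_derive; auto.
      + apply (rc_id_fun (fun t => exp (k * t))). intros; auto_derive; auto.
    - apply filterlim_const. }
  assert (Hneg : forall t, 0 < t < T -> h t < m * rho^2 - V 0 -> dh t <= 0).
  { intros t ht hh. unfold h in hh.
    assert (e1 : 1 <= exp (k * t)).
    { rewrite <- exp_0. apply Rlt_le, exp_increasing. nra. }
    assert (hVt : 0 <= V t) by (unfold V; apply Rplus_le_le_0_compat; apply Rmult_le_pos; try nra; apply pow2_ge_0).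
    assert (V t < m * rho^2) by nra.
    set (x := xa t - as0) in *. set (y := xs t - ss0) in *.
    assert (hm1 : m <= ga * w1) by apply Rmin_l. assert (hm2 : m <= gs * w2) by apply Rmin_r.
    assert (hm0 : 0 < m) by (unfold m; apply Rmin_glb_lt; nra).
    assert (m * (x^2 + y^2) <= V t) by (unfold V; fold x y; nra).
    assert (hxy : x^2 + y^2 < rho^2).
    { apply (Rmult_lt_reg_l m); lra. }
    pose proof (Hly x y hxy).
    assert (V t <= (ga*w1 + gs*w2) * (x^2 + y^2)) by (unfold V; fold x y; nra).
    assert (k * V t <= c * (x^2 + y^2)).
    { unfold k. apply (Rmult_le_reg_l (ga*w1 + gs*w2)); [nra|].
      replace ((ga * w1 + gs * w2) * (c / (ga * w1 + gs * w2) * V t)) with (c * V t) by (field; nra).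
      assert (0 <= x^2 + y^2) by nra. nra. }
    unfold dh. fold x y. assert (0 < exp (k * t)) by apply exp_pos.
    apply Rmult_le_0_l; lra. }
  assert (H0 : h 0 <= 0) by (unfold h; rewrite Rmult_0_r, exp_0; lra).
  assert (heta : 0 < m * rho^2 - V 0) by (unfold V, m; lra).
  intros t ht.
  pose proof (barrier h dh T (m * rho^2 - V 0) heta Hd (rc_of_filterlim h Hrc) Hneg H0 t ht) as B.
  unfold h in B. change (V t <= V 0 * exp (- k * t)).
  assert (V t * exp (k * t) <= V 0) by lra.
  replace (V t) with (V t * exp (k * t) * exp (- k * t)).
  2:{ rewrite Rmult_assoc, <- exp_plus. replace (k * t + - k * t) with 0 by ring. rewrite exp_0; ring. }
  apply Rmult_le_compat_r; [apply Rlt_le, exp_pos|auto].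
Qed.

Lemma quad_lb al be ga x y : 0 < al -> 0 < ga -> 0 < al * ga - be^2 ->
  (al * ga - be^2) / (al + ga) * (x^2 + y^2) <= al * x^2 - 2 * be * x * y + ga * y^2.
Proof.
  intros h1 h2 h3.
  apply (Rmult_le_reg_l (al + ga)); [lra|].
  replace ((al + ga) * ((al * ga - be ^ 2) / (al + ga) * (x ^ 2 + y ^ 2)))
    with ((al * ga - be^2) * (x^2 + y^2)) by (field; lra).
  assert (0 <= (al * x - be * y)^2 + (be * x - ga * y)^2) by (pose proof (pow2_ge_0 (al*x-be*y)); pose proof (pow2_ge_0 (be*x-ga*y)); lra).
  nra.
Qed.

Lemma poly_bd k0 k1 k2 x : Rabs x <= 1 -> Rabs (k0 + k1 * x + k2 * x^2) <= Rabs k0 + Rabs k1 + Rabs k2.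
Proof.
  intros hx.
  pose proof (Rabs_triang (k0 + k1 * x) (k2 * x^2)). pose proof (Rabs_triang k0 (k1 * x)).
  rewrite !Rabs_mult in *. rewrite <- RPow_abs in *.
  assert (Rabs k1 * Rabs x <= Rabs k1) by (pose proof (Rabs_pos k1); pose proof (Rabs_pos x); nra).
  assert (Rabs x ^ 2 <= 1) by (pose proof (Rabs_pos x); nra).
  assert (Rabs k2 * Rabs x ^ 2 <= Rabs k2) by (pose proof (Rabs_pos k2); nra).
  lra.
Qed.

Lemma abs_lt_of_sq x rho : 0 < rho -> x^2 < rho^2 -> Rabs x < rho.
Proof. intros hr h. destruct (Rcase_abs x); [rewrite Rabs_left by lra|rewrite Rabs_right by lra]; nra. Qed.

Lemma nl_bd (p0 p1 p2 q0 q1 q2 x y : R) : Rabs x <= 1 -> Rabs y <= 1 ->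
  Rabs (x^2 * (p0 + p1 * x + p2 * x^2) + y^2 * (q0 + q1 * y + q2 * y^2)) <=
  (Rabs p0 + Rabs p1 + Rabs p2 + Rabs q0 + Rabs q1 + Rabs q2) * (x^2 + y^2).
Proof.
  intros hx hy. pose proof (poly_bd p0 p1 p2 x hx). pose proof (poly_bd q0 q1 q2 y hy).
  pose proof (Rabs_triang (x^2 * (p0 + p1 * x + p2 * x^2)) (y^2 * (q0 + q1 * y + q2 * y^2))).
  rewrite !Rabs_mult in H1. rewrite !(Rabs_pos_eq (_ ^ 2)) in H1 by apply pow2_ge_0.
  pose proof (pow2_ge_0 x). pose proof (pow2_ge_0 y).
  pose proof (Rabs_pos p0). pose proof (Rabs_pos p1). pose proof (Rabs_pos p2).
  pose proof (Rabs_pos q0). pose proof (Rabs_pos q1). pose proof (Rabs_pos q2).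
  nra.
Qed.

Lemma lyap_model e sg Qb l a s : 0 < e < 2 -> 0 < sg -> 0 <= l -> 0 < a -> 0 < s ->
  G1 e sg l a s = 0 -> G2 e sg Qb l a s = 0 ->
  exists c rho, 0 < c /\ 0 < rho /\ forall x y, x^2 + y^2 < rho^2 ->
   2 * J21 e sg l a s * x * G1 e sg l (a + x) (s + y) +
   2 * J12 e sg l a s * y * G2 e sg Qb l (a + x) (s + y) <= - c * (x^2 + y^2).
Proof.
  intros he hs hl ha hss g1 g2.
  pose proof (Dlt_pos e sg l a s he hs hl ha hss g1) as hD.
  set (j11 := J11 e sg l a s) in *. set (j12 := J12 e sg l a s) in *.
  set (j21 := J21 e sg l a s) in *. set (j22 := J22 e sg l a s) in *.
  assert (a3 : 0 < a^3) by (apply pow_lt; lra). assert (s3 : 0 < s^3) by (apply pow_lt; lra).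
  assert (es : 0 < e * sg) by nra.
  assert (ea3 : 0 < e * sg * a^3) by (apply Rmult_lt_0_compat; lra).
  assert (es3 : 0 < e * sg * s^3) by (apply Rmult_lt_0_compat; lra).
  assert (ss3 : 0 < sg * s^3) by (apply Rmult_lt_0_compat; lra).
  assert (h21 : 0 < j21) by (unfold j21, J21; lra).
  assert (h12 : 0 < j12) by (unfold j12, J12; lra).
  assert (h11 : j11 < 0) by (unfold j11, J11; lra).
  assert (h22 : j22 < 0) by (unfold j22, J22; lra).
  set (al := - j21 * j11). set (be := j12 * j21). set (gm := - j12 * j22).
  assert (hal : 0 < al) by (unfold al; nra). assert (hgm : 0 < gm) by (unfold gm; nra).
  assert (hdisc : 0 < al * gm - be^2).
  { replace (al * gm - be^2) with (j12 * j21 * Dlt e sg l a s) by (unfold al, gm, be, Dlt; fold j11 j12 j21 j22; ring).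
    apply Rmult_lt_0_compat; [nra|auto]. }
  set (c0 := (al * gm - be^2) / (al + gm)).
  assert (hc0 : 0 < c0) by (unfold c0; apply Rdiv_lt_0_compat; lra).
  set (S1 := Rabs (-12 * e * sg * a^2) + Rabs (-8 * e * sg * a) + Rabs (-2 * e * sg)
           + Rabs (6 * e * sg * s^2) + Rabs (4 * e * sg * s) + Rabs (e * sg)).
  set (S2 := Rabs (6 * e * sg * a^2) + Rabs (4 * e * sg * a) + Rabs (e * sg)
           + Rabs (-6 * sg * s^2) + Rabs (-4 * sg * s) + Rabs (- sg)).
  assert (hS1 : 0 <= S1) by (unfold S1; repeat apply Rplus_le_le_0_compat; apply Rabs_pos).
  assert (hS2 : 0 <= S2) by (unfold S2; repeat apply Rplus_le_le_0_compat; apply Rabs_pos).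
  set (rho := Rmin 1 (c0 / (2 * (j21 + j12) * (S1 + S2 + 1)))).
  assert (hrho : 0 < rho).
  { unfold rho. apply Rmin_pos; [lra|]. apply Rdiv_lt_0_compat; [lra|]. 
    apply Rmult_lt_0_compat; lra. }
  assert (hr1 : rho <= 1) by apply Rmin_l.
  assert (hr2 : rho * (2 * (j21 + j12) * (S1 + S2 + 1)) <= c0).
  { assert (rho <= c0 / (2 * (j21 + j12) * (S1 + S2 + 1))) by apply Rmin_r.
    assert (0 < 2 * (j21 + j12) * (S1 + S2 + 1)) by (apply Rmult_lt_0_compat; lra).
    apply (Rmult_le_compat_r (2 * (j21 + j12) * (S1 + S2 + 1))) in H; [|lra].
    replace (c0 / (2 * (j21 + j12) * (S1 + S2 + 1)) * (2 * (j21 + j12) * (S1 + S2 + 1))) with c0 in H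
      by (field; lra). lra. }
  exists c0, rho. split; auto. split; auto.
  intros x y hxy.
  assert (hx : Rabs x < rho) by (apply abs_lt_of_sq; auto; pose proof (pow2_ge_0 y); lra).
  assert (hy : Rabs y < rho) by (apply abs_lt_of_sq; auto; pose proof (pow2_ge_0 x); lra).
  set (n1 := x^2 * (-12 * e * sg * a^2 + (-8 * e * sg * a) * x + (-2 * e * sg) * x^2)
           + y^2 * (6 * e * sg * s^2 + (4 * e * sg * s) * y + (e * sg) * y^2)).
  set (n2 := x^2 * (6 * e * sg * a^2 + (4 * e * sg * a) * x + (e * sg) * x^2)
           + y^2 * (-6 * sg * s^2 + (-4 * sg * s) * y + (- sg) * y^2)).
  assert (E1 : G1 e sg l (a + x) (s + y) = G1 e sg l a s + j11 * x + j12 * y + n1)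
    by (unfold G1, j11, j12, J11, J12, n1; ring).
  assert (E2 : G2 e sg Qb l (a + x) (s + y) = G2 e sg Qb l a s + j21 * x + j22 * y + n2)
    by (unfold G2, j21, j22, J21, J22, n2; ring).
  rewrite E1, E2, g1, g2.
  assert (b1 : Rabs n1 <= S1 * (x^2 + y^2)) by (unfold n1, S1; apply nl_bd; lra).
  assert (b2 : Rabs n2 <= S2 * (x^2 + y^2)) by (unfold n2, S2; apply nl_bd; lra).
  assert (q := quad_lb al be gm x y hal hgm hdisc). fold c0 in q.
  assert (hsq : 0 <= x^2 + y^2) by (pose proof (pow2_ge_0 x); pose proof (pow2_ge_0 y); lra).
  assert (t1 : x * n1 <= rho * (S1 * (x^2 + y^2))).
  { eapply Rle_trans; [apply Rle_abs|]. rewrite Rabs_mult.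
    apply Rmult_le_compat; try apply Rabs_pos; lra. }
  assert (t2 : y * n2 <= rho * (S2 * (x^2 + y^2))).
  { eapply Rle_trans; [apply Rle_abs|]. rewrite Rabs_mult.
    apply Rmult_le_compat; try apply Rabs_pos; lra. }
  assert (Q : 2 * j21 * x * (0 + j11 * x + j12 * y + n1) + 2 * j12 * y * (0 + j21 * x + j22 * y + n2)
    = -2 * (al * x^2 - 2 * be * x * y + gm * y^2) + 2 * j21 * (x * n1) + 2 * j12 * (y * n2))
    by (unfold al, be, gm; ring).
  rewrite Q.
  assert (2 * j21 * (x * n1) <= 2 * j21 * (rho * (S1 * (x^2 + y^2)))) by (apply Rmult_le_compat_l; lra).
  assert (2 * j12 * (y * n2) <= 2 * j12 * (rho * (S2 * (x^2 + y^2)))) by (apply Rmult_le_compat_l; lra).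
  assert (2 * j21 * (rho * (S1 * (x^2 + y^2))) + 2 * j12 * (rho * (S2 * (x^2 + y^2)))
          <= rho * (2 * (j21 + j12) * (S1 + S2 + 1)) * (x^2 + y^2)).
  { assert (hP : 0 <= rho * (x^2 + y^2)) by (apply Rmult_le_pos; lra).
    replace (2 * j21 * (rho * (S1 * (x^2 + y^2))) + 2 * j12 * (rho * (S2 * (x^2 + y^2))))
      with ((rho * (x^2 + y^2)) * (2 * (j21 * S1 + j12 * S2))) by ring.
    replace (rho * (2 * (j21 + j12) * (S1 + S2 + 1)) * (x^2 + y^2))
      with ((rho * (x^2 + y^2)) * (2 * (j21 + j12) * (S1 + S2 + 1))) by ring.
    apply Rmult_le_compat_l; auto.
    assert (0 <= j21 * (S2 + 1)) by (apply Rmult_le_pos; lra).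
    assert (0 <= j12 * (S1 + 1)) by (apply Rmult_le_pos; lra).
    nra. }
  assert (rho * (2 * (j21 + j12) * (S1 + S2 + 1)) * (x^2 + y^2) <= c0 * (x^2 + y^2))
    by (apply Rmult_le_compat_r; auto).
  lra.
Qed.

Lemma dist_lt a s a' s' d : 0 < d -> (a - a')^2 + (s - s')^2 < d^2 -> dist2 a s a' s' < d.
Proof.
  intros hd h. unfold dist2. rewrite <- (sqrt_pow2 d) by lra. apply sqrt_lt_1_alt.
  split; [|exact h]. pose proof (pow2_ge_0 (a - a')). pose proof (pow2_ge_0 (s - s')). lra.
Qed.

Lemma dist_inv a s a' s' d : dist2 a s a' s' < d ->
  0 < d /\ (a - a')^2 + (s - s')^2 < d^2 /\ Rabs (a - a') < d /\ Rabs (s - s') < d.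
Proof.
  intros h. unfold dist2 in h.
  pose proof (pow2_ge_0 (a - a')). pose proof (pow2_ge_0 (s - s')).
  assert (hS : 0 <= (a - a')^2 + (s - s')^2) by lra.
  pose proof (sqrt_pos ((a - a')^2 + (s - s')^2)) as hq.
  assert (hd : 0 < d) by lra.
  assert (hsq : (a - a')^2 + (s - s')^2 < d^2).
  { rewrite <- (pow2_sqrt ((a - a')^2 + (s - s')^2)) by lra. nra. }
  split; auto. split; auto. split; apply abs_lt_of_sq; auto; lra.
Qed.

Lemma rhs_a_G sg e l a s : 0 <= a -> 0 <= s -> rhs_a sg e l a s = G1 e sg l a s.
Proof. intros ha hs. unfold rhs_a, G1. rewrite !Rabs_pos_eq by auto. ring. Qed.

Lemma rhs_s_G sg q Tm Tp bm bp e l a s be : 0 <= a -> 0 <= s -> coalbedo Tm Tp bm bp s = be ->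
  rhs_s sg q Tm Tp bm bp e l a s = G2 e sg (q * be) l a s.
Proof. intros ha hs hc. unfold rhs_s, G2. rewrite hc, !Rabs_pos_eq by auto. ring. Qed.

Lemma side_const Tm Tp bm bp Ts0 : 0 < Tm < Tp -> (Tp < Ts0 \/ Ts0 < Tm) ->
  exists be mg, (be = bm \/ be = bp) /\ 0 < mg /\
    forall s, Rabs (s - Ts0) < mg -> coalbedo Tm Tp bm bp s = be.
Proof.
  intros hT [w|c].
  - exists bp, (Ts0 - Tp). split; [auto|]. split; [lra|].
    intros s hs. apply Rabs_def2 in hs. unfold coalbedo.
    destruct (Rle_dec s Tm); [lra|]. destruct (Rle_dec Tp s); [reflexivity|lra].
  - exists bm, (Tm - Ts0). split; [auto|]. split; [lra|].
    intros s hs. apply Rabs_def2 in hs. unfold coalbedo.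
    destruct (Rle_dec s Tm); [reflexivity|lra].
Qed.

Lemma uniq_G e sg Qb l a s a' s' : 0 < e < 2 -> 0 < sg -> 0 < Qb -> 0 <= l ->
  0 < a -> 0 < s -> 0 < a' -> 0 < s' ->
  G1 e sg l a s = 0 -> G2 e sg Qb l a s = 0 -> G1 e sg l a' s' = 0 -> G2 e sg Qb l a' s' = 0 ->
  a = a' /\ s = s'.
Proof.
  intros. destruct (t_order e sg Qb l a s l a' s') as [h _]; auto; try lra.
  destruct (sol_from_t e sg Qb l a s l a' s') as [h' _]; auto.
Qed.

Lemma mono_G e sg Qb l a s l' a' s' : 0 < e < 2 -> 0 < sg -> 0 < Qb -> 0 <= l -> l < l' ->
  0 < a -> 0 < s -> 0 < a' -> 0 < s' ->
  G1 e sg l a s = 0 -> G2 e sg Qb l a s = 0 -> G1 e sg l' a' s' = 0 -> G2 e sg Qb l' a' s' = 0 ->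
  s' < s /\ (e < 1 -> a < a') /\ (1 < e -> a' < a).
Proof.
  intros. destruct (t_order e sg Qb l a s l' a' s') as [_ h]; auto; try lra.
  destruct (sol_from_t e sg Qb l a s l' a' s') as [_ h']; auto; lra.
Qed.

Lemma pos_of_G e sg Qb l a s : 0 < e -> 0 < sg -> 0 < Qb -> 0 <= l -> 0 <= a -> 0 <= s ->
  G1 e sg l a s = 0 -> G2 e sg Qb l a s = 0 -> 0 < a /\ 0 < s.
Proof.
  intros he hs hQ hl ha hss g1 g2. unfold G1, G2 in *.
  assert (es : 0 < e * sg) by nra.
  assert (hs0 : 0 < s).
  { destruct (Req_dec s 0) as [->|n]; [|lra]. exfalso.
    assert (0 <= a^4) by (apply pow_le; lra).
    assert (l * a >= 0) by nra.
    assert (a^4 = 0) by nra. 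
    assert (a = 0) by (destruct (Req_dec a 0); auto; exfalso; apply (pow_nonzero a 4); auto). subst. 
    simpl in g2. lra. }
  split; auto. destruct (Req_dec a 0) as [->|n]; [|lra]. exfalso.
  assert (0 < s^4) by (apply pow_lt; lra). assert (l * s >= 0) by nra. simpl in g1. nra.
Qed.

Lemma stab_model ga gs sigB q Tm Tp bm bp eps lam a s be rho0 :
  0 < ga -> 0 < gs -> 0 < eps < 2 -> 0 < sigB -> 0 <= lam -> 0 < a -> 0 < s -> 0 < rho0 ->
  G1 eps sigB lam a s = 0 -> G2 eps sigB (q * be) lam a s = 0 ->
  (forall a' s', (a' - a)^2 + (s' - s)^2 < rho0^2 ->
     rhs_a sigB eps lam a' s' = G1 eps sigB lam a' s' /\
     rhs_s sigB q Tm Tp bm bp eps lam a' s' = G2 eps sigB (q * be) lam a' s') ->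
  exp_stable ga gs sigB q Tm Tp bm bp eps lam a s.
Proof.
  intros hga hgs he hs hl ha hss hr0 g1 g2 reg.
  destruct (lyap_model eps sigB (q * be) lam a s he hs hl ha hss g1 g2) as [c [rho1 [hc [hr1 Ly]]]].
  set (rho := Rmin rho1 rho0).
  assert (hrho : 0 < rho) by (unfold rho; apply Rmin_pos; lra).
  assert (hrr1 : rho <= rho1) by apply Rmin_l. assert (hrr0 : rho <= rho0) by apply Rmin_r.
  set (w1 := J21 eps sigB lam a s). set (w2 := J12 eps sigB lam a s).
  assert (es : 0 < eps * sigB) by nra.
  assert (a3 : 0 < eps * sigB * a^3) by (apply Rmult_lt_0_compat; [lra|apply pow_lt; lra]).
  assert (s3 : 0 < eps * sigB * s^3) by (apply Rmult_lt_0_compat; [lra|apply pow_lt; lra]).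
  assert (hw1 : 0 < w1) by (unfold w1, J21; lra).
  assert (hw2 : 0 < w2) by (unfold w2, J12; lra).
  set (F1 := fun x y => rhs_a sigB eps lam (a + x) (s + y)).
  set (F2 := fun x y => rhs_s sigB q Tm Tp bm bp eps lam (a + x) (s + y)).
  assert (LyF : forall x y, x^2 + y^2 < rho^2 -> 2*w1*x*F1 x y + 2*w2*y*F2 x y <= - c * (x^2 + y^2)).
  { intros x y hxy. unfold F1, F2.
    assert (hreg : (a + x - a)^2 + (s + y - s)^2 < rho0^2).
    { replace (a + x - a) with x by ring. replace (s + y - s) with y by ring.
      assert (rho^2 <= rho0^2) by (apply pow_incr; lra). lra. }
    destruct (reg (a + x) (s + y) hreg) as [r1 r2]. rewrite r1, r2.
    apply Ly. assert (rho^2 <= rho1^2) by (apply pow_incr; lra). lra. }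
  set (m := Rmin (ga * w1) (gs * w2)). set (Mv := ga * w1 + gs * w2).
  assert (hm : 0 < m) by (unfold m; apply Rmin_glb_lt; nra).
  assert (hmM : m <= Mv) by (unfold m, Mv; pose proof (Rmin_l (ga*w1) (gs*w2)); nra).
  assert (hm1 : m <= ga * w1) by apply Rmin_l. assert (hm2 : m <= gs * w2) by apply Rmin_r.
  exists (rho * m / Mv), (Mv / m), (c / Mv / 2).
  assert (hMv : 0 < Mv) by lra.
  split; [apply Rdiv_lt_0_compat; [nra|lra]|].
  split; [apply Rdiv_lt_0_compat; lra|].
  split; [apply Rdiv_lt_0_compat; [apply Rdiv_lt_0_compat; lra|lra]|].
  intros Tend xa xs hT [hra [hrs hder]] hd t ht.
  destruct (dist_inv _ _ _ _ _ hd) as [_ [hd0 _]].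
  set (x0 := xa 0 - a) in *. set (y0 := xs 0 - s) in *.
  assert (hV0 : ga*w1*x0^2 + gs*w2*y0^2 < m * rho^2).
  { assert (ga*w1*x0^2 + gs*w2*y0^2 <= Mv * (x0^2 + y0^2)) by (unfold Mv; pose proof (pow2_ge_0 x0); pose proof (pow2_ge_0 y0); nra).
    assert (Mv * (x0^2 + y0^2) < Mv * (rho * m / Mv)^2) by (apply Rmult_lt_compat_l; lra).
    assert (Mv * (rho * m / Mv)^2 = m * rho^2 * (m / Mv)) by (field; lra).
    assert (m / Mv <= 1) by (apply (Rmult_le_reg_r Mv); [lra|]; unfold Rdiv; rewrite Rmult_assoc, Rinv_l; lra).
    assert (0 < m * rho^2) by (apply Rmult_lt_0_compat; [lra|apply pow_lt; lra]).
    assert (m * rho^2 * (m / Mv) <= m * rho^2) by (rewrite <- (Rmult_1_r (m * rho^2)) at 2; apply Rmult_le_compat_l; lra).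
    lra. }
  assert (hder' : forall t, 0 < t < Tend -> is_derive xa t (F1 (xa t - a) (xs t - s) / ga) /\
                         is_derive xs t (F2 (xa t - a) (xs t - s) / gs)).
  { intros t' ht'. unfold F1, F2. replace (a + (xa t' - a)) with (xa t') by ring.
    replace (s + (xs t' - s)) with (xs t') by ring. apply hder; auto. }
  pose proof (ode_decay ga gs w1 w2 c rho a s Tend F1 F2 xa xs hga hgs hw1 hw2 hc hrho LyF hra hrs hder' hV0 t ht) as D.
  fold x0 y0 in D. fold Mv in D.
  set (xt := xa t - a) in *. set (yt := xs t - s) in *.
  set (E := exp (- (c / Mv) * t)) in *.
  assert (hE : 0 < E) by apply exp_pos.
  assert (hdt : m * (xt^2 + yt^2) <= ga*w1*xt^2 + gs*w2*yt^2) by (pose proof (pow2_ge_0 xt); pose proof (pow2_ge_0 yt); nra).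
  assert (hV0' : ga*w1*x0^2 + gs*w2*y0^2 <= Mv * (x0^2 + y0^2)) by (unfold Mv; pose proof (pow2_ge_0 x0); pose proof (pow2_ge_0 y0); nra).
  assert (hxt : xt^2 + yt^2 <= (Mv / m) * E * (x0^2 + y0^2)).
  { apply (Rmult_le_reg_l m); [lra|].
    replace (m * (Mv / m * E * (x0 ^ 2 + y0 ^ 2))) with (Mv * (x0^2 + y0^2) * E) by (field; lra).
    assert ((ga*w1*x0^2 + gs*w2*y0^2) * E <= Mv * (x0^2 + y0^2) * E) by (apply Rmult_le_compat_r; lra).
    lra. }
  set (C := Mv / m).
  assert (hC : 1 <= C) by (unfold C; apply (Rmult_le_reg_r m); [lra|]; unfold Rdiv; rewrite Rmult_assoc, Rinv_l; lra).
  set (D0 := dist2 (xa 0) (xs 0) a s).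
  assert (hD0 : 0 <= D0) by apply sqrt_pos.
  assert (hD0sq : D0^2 = x0^2 + y0^2).
  { unfold D0, dist2. fold x0 y0. apply pow2_sqrt. pose proof (pow2_ge_0 x0); pose proof (pow2_ge_0 y0); lra. }
  assert (hEm : exp (- (c / Mv / 2) * t) ^ 2 = E).
  { unfold E. simpl. rewrite Rmult_1_r, <- exp_plus. f_equal. field. lra. }
  unfold dist2 at 1. fold xt yt.
  assert (hR : 0 <= C * exp (- (c / Mv / 2) * t) * D0).
  { apply Rmult_le_pos; [apply Rmult_le_pos; [lra|apply Rlt_le, exp_pos]|auto]. }
  rewrite <- (sqrt_pow2 (C * exp (- (c / Mv / 2) * t) * D0)) by auto.
  apply sqrt_le_1_alt.
  replace ((C * exp (- (c / Mv / 2) * t) * D0) ^ 2) with (C^2 * (exp (- (c / Mv / 2) * t))^2 * D0^2) by ring.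
  rewrite hEm, hD0sq.
  assert (0 <= x0^2 + y0^2) by (pose proof (pow2_ge_0 x0); pose proof (pow2_ge_0 y0); lra).
  assert (C <= C^2) by nra.
  assert (C * E * (x0^2 + y0^2) <= C^2 * E * (x0^2 + y0^2)).
  { apply Rmult_le_compat_r; auto. apply Rmult_le_compat_r; lra. }
  fold C in hxt. lra.
Qed.

Lemma series_shift (Y : nat -> R) u v s1 : is_pseries Y u v ->
  is_pseries (fun n => s1 * 0 ^ n + Y n) u (s1 + v).
Proof.
  intros h.
  assert (mc : forall a : R, mult u a = mult a u) by (intros; apply Rmult_comm).
  pose proof (is_pseries_plus _ _ _ _ _ (is_pseries_scal s1 _ _ _ (mc _) (pser_single u)) h) as T.
  replace (s1 + v) with (plus (scal s1 1) v) by (unfold plus, scal; simpl; unfold mult; simpl; ring).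
  eapply is_pseries_ext; [|exact T]. intros n. unfold PS_plus, PS_scal. reflexivity.
Qed.

Theorem proposition2p6
  (ga gs sigB q Tm Tp bm bp eps : R)
  (hga : 0 < ga) (hgs : 0 < gs) (hsig : 0 < sigB) (hq : 0 < q)
  (hT : 0 < Tm < Tp) (hb : 0 < bm < bp) (heps : 0 < eps < 2)
  (lam0 Ta0 Ts0 : R) (hlam0 : 0 <= lam0)
  (heq : is_equilibrium sigB q Tm Tp bm bp eps lam0 Ta0 Ts0)
  (hwc : Tp < Ts0 \/ Ts0 < Tm) :
  exists (dl dx : R) (Ta_eq Ts_eq : R -> R),
    0 < dl /\ 0 < dx /\
    Ta_eq lam0 = Ta0 /\ Ts_eq lam0 = Ts0 /\
    (forall lam, 0 <= lam -> Rabs (lam - lam0) < dl ->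
       is_equilibrium sigB q Tm Tp bm bp eps lam (Ta_eq lam) (Ts_eq lam) /\
       dist2 (Ta_eq lam) (Ts_eq lam) Ta0 Ts0 < dx /\
       (forall Ta Ts, is_equilibrium sigB q Tm Tp bm bp eps lam Ta Ts ->
          dist2 Ta Ts Ta0 Ts0 < dx -> Ta = Ta_eq lam /\ Ts = Ts_eq lam) /\
       exp_stable ga gs sigB q Tm Tp bm bp eps lam (Ta_eq lam) (Ts_eq lam)) /\
    analytic_on (fun lam => 0 <= lam /\ Rabs (lam - lam0) < dl) Ts_eq /\
    analytic_on (fun lam => 0 <= lam /\ Rabs (lam - lam0) < dl) Ta_eq /\
    strictly_decreasing_on (fun lam => 0 <= lam /\ Rabs (lam - lam0) < dl) Ts_eq /\
    (eps < 1 ->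
       strictly_increasing_on (fun lam => 0 <= lam /\ Rabs (lam - lam0) < dl) Ta_eq) /\
    (1 < eps ->
       strictly_decreasing_on (fun lam => 0 <= lam /\ Rabs (lam - lam0) < dl) Ta_eq).
Proof.
  destruct heq as [hTa0 [hTs0 [ha0 hs0]]].
  destruct (side_const Tm Tp bm bp Ts0 hT hwc) as [be [mg [hbe [hmg hside]]]].
  assert (hbe0 : 0 < be) by (destruct hbe; lra).
  set (Qb := q * be).
  assert (hQ : 0 < Qb) by (unfold Qb; nra).
  assert (hc0 : coalbedo Tm Tp bm bp Ts0 = be) by (apply hside; rewrite Rminus_diag, Rabs_R0; lra).
  rewrite rhs_a_G in ha0 by auto. rewrite (rhs_s_G _ _ _ _ _ _ _ _ _ _ be) in hs0 by auto.
  fold Qb in hs0.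
  destruct (pos_of_G eps sigB Qb lam0 Ta0 Ts0 ltac:(lra) hsig hQ hlam0 hTa0 hTs0 ha0 hs0) as [pa0 ps0].
  pose proof (Dlt_pos eps sigB lam0 Ta0 Ts0 heps hsig hlam0 pa0 ps0 ha0) as hD0.
  set (e0 := Rmin (Rmin Ta0 Ts0) mg / 4).
  assert (he0 : 0 < e0) by (unfold e0; apply Rdiv_lt_0_compat; [apply Rmin_pos; [apply Rmin_pos|]|]; lra).
  assert (he1 : 4 * e0 <= Ta0) by (unfold e0; pose proof (Rmin_l (Rmin Ta0 Ts0) mg); pose proof (Rmin_l Ta0 Ts0); lra).
  assert (he2 : 4 * e0 <= Ts0) by (unfold e0; pose proof (Rmin_l (Rmin Ta0 Ts0) mg); pose proof (Rmin_r Ta0 Ts0); lra).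
  assert (he3 : 4 * e0 <= mg) by (unfold e0; pose proof (Rmin_r (Rmin Ta0 Ts0) mg); lra).
  destruct (local_analytic eps sigB Qb lam0 Ta0 Ts0 ha0 hs0 ltac:(lra) e0 he0) as [r [hr [X [Y [hX0 [hY0 H]]]]]].
  set (Ta_eq := fun lam => Ta0 + PSeries X (lam - lam0)).
  set (Ts_eq := fun lam => Ts0 + PSeries Y (lam - lam0)).
  assert (sol : forall lam, 0 <= lam /\ Rabs (lam - lam0) < r ->
    0 < Ta_eq lam /\ 0 < Ts_eq lam /\ G1 eps sigB lam (Ta_eq lam) (Ts_eq lam) = 0 /\
    G2 eps sigB Qb lam (Ta_eq lam) (Ts_eq lam) = 0 /\
    Rabs (Ta_eq lam - Ta0) < e0 /\ Rabs (Ts_eq lam - Ts0) < e0).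
  { intros lam [hl hlr]. destruct (H (lam - lam0) hlr) as [_ [_ [k3 [k4 [k5 k6]]]]].
    replace (lam0 + (lam - lam0)) with lam in k5, k6 by ring.
    unfold Ta_eq, Ts_eq. replace (Ta0 + PSeries X (lam - lam0) - Ta0) with (PSeries X (lam - lam0)) by ring.
    replace (Ts0 + PSeries Y (lam - lam0) - Ts0) with (PSeries Y (lam - lam0)) by ring.
    apply Rabs_def2 in k3. apply Rabs_def2 in k4.
    repeat split; auto; try lra; apply Rabs_def1; lra. }
  exists r, (2 * e0), Ta_eq, Ts_eq.
  split; [auto|]. split; [lra|].
  split. { unfold Ta_eq. rewrite Rminus_diag, PSeries_0, hX0. ring. }
  split. { unfold Ts_eq. rewrite Rminus_diag, PSeries_0, hY0. ring. }
  split.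
  { intros lam hl hlr. destruct (sol lam (conj hl hlr)) as [p1 [p2 [q1 [q2 [d1 d2]]]]].
    assert (cb : coalbedo Tm Tp bm bp (Ts_eq lam) = be) by (apply hside; lra).
    split.
    { split; [lra|]. split; [lra|]. split.
      - rewrite rhs_a_G by lra. auto.
      - rewrite (rhs_s_G _ _ _ _ _ _ _ _ _ _ be) by (auto; lra). auto. }
    split.
    { apply dist_lt; [lra|]. apply Rabs_def2 in d1. apply Rabs_def2 in d2.
      assert ((Ta_eq lam - Ta0)^2 < e0^2) by nra. assert ((Ts_eq lam - Ts0)^2 < e0^2) by nra.
      nra. }
    split.
    { intros Ta Ts [hTa [hTs [ea es]]] hd.
      destruct (dist_inv _ _ _ _ _ hd) as [_ [_ [da ds]]].
      apply Rabs_def2 in da. apply Rabs_def2 in ds.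
      assert (cb' : coalbedo Tm Tp bm bp Ts = be) by (apply hside; apply Rabs_def1; lra).
      rewrite rhs_a_G in ea by auto. rewrite (rhs_s_G _ _ _ _ _ _ _ _ _ _ be) in es by auto.
      fold Qb in es.
      apply (uniq_G eps sigB Qb lam); auto; lra. }
    { apply (stab_model ga gs sigB q Tm Tp bm bp eps lam (Ta_eq lam) (Ts_eq lam) be
               (Rmin (Rmin (Ta_eq lam) (Ts_eq lam)) (mg / 2) / 2)); auto.
      - apply Rdiv_lt_0_compat; [apply Rmin_pos; [apply Rmin_pos|]|]; lra.
      - intros a' s' hreg.
        set (rr := Rmin (Rmin (Ta_eq lam) (Ts_eq lam)) (mg / 2) / 2) in *.
        assert (hrr : 0 < rr) by (unfold rr; apply Rdiv_lt_0_compat; [apply Rmin_pos; [apply Rmin_pos|]|]; lra).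
        assert (r1 : 2 * rr <= Ta_eq lam) by (unfold rr; pose proof (Rmin_l (Rmin (Ta_eq lam) (Ts_eq lam)) (mg/2)); pose proof (Rmin_l (Ta_eq lam) (Ts_eq lam)); lra).
        assert (r2 : 2 * rr <= Ts_eq lam) by (unfold rr; pose proof (Rmin_l (Rmin (Ta_eq lam) (Ts_eq lam)) (mg/2)); pose proof (Rmin_r (Ta_eq lam) (Ts_eq lam)); lra).
        assert (r3 : 2 * rr <= mg / 2) by (unfold rr; pose proof (Rmin_r (Rmin (Ta_eq lam) (Ts_eq lam)) (mg/2)); lra).
        assert (xa : Rabs (a' - Ta_eq lam) < rr) by (apply abs_lt_of_sq; auto; pose proof (pow2_ge_0 (s' - Ts_eq lam)); lra).
        assert (xs : Rabs (s' - Ts_eq lam) < rr) by (apply abs_lt_of_sq; auto; pose proof (pow2_ge_0 (a' - Ta_eq lam)); lra).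
        apply Rabs_def2 in xa. apply Rabs_def2 in xs. apply Rabs_def2 in d2.
        assert (cb' : coalbedo Tm Tp bm bp s' = be) by (apply hside; apply Rabs_def1; lra).
        split; [apply rhs_a_G; lra|]. apply rhs_s_G; auto; lra. } }
  split.
  { intros x0 hx0. destruct (sol x0 hx0) as [p1 [p2 [q1 [q2 _]]]].
    pose proof (Dlt_pos eps sigB x0 (Ta_eq x0) (Ts_eq x0) heps hsig ltac:(lra) p1 p2 q1) as hD.
    set (e1 := Rmin (Ta_eq x0) (Ts_eq x0) / 2).
    assert (he1' : 0 < e1) by (unfold e1; apply Rdiv_lt_0_compat; [apply Rmin_pos|]; lra).
    assert (f1 : e1 <= Ta_eq x0 / 2) by (unfold e1; pose proof (Rmin_l (Ta_eq x0) (Ts_eq x0)); lra).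
    assert (f2 : e1 <= Ts_eq x0 / 2) by (unfold e1; pose proof (Rmin_r (Ta_eq x0) (Ts_eq x0)); lra).
    destruct (local_analytic eps sigB Qb x0 (Ta_eq x0) (Ts_eq x0) q1 q2 ltac:(lra) e1 he1')
      as [r1 [hr1 [X1 [Y1 [_ [_ H1]]]]]].
    exists (fun n => Ts_eq x0 * 0 ^ n + Y1 n), r1. split; auto.
    intros x hx hxr. destruct (H1 (x - x0) hxr) as [k1 [k2 [k3 [k4 [k5 k6]]]]].
    replace (x0 + (x - x0)) with x in k5, k6 by ring.
    destruct (sol x hx) as [p1' [p2' [q1' [q2' _]]]].
    apply Rabs_def2 in k3. apply Rabs_def2 in k4.
    destruct (uniq_G eps sigB Qb x (Ta_eq x) (Ts_eq x) (Ta_eq x0 + PSeries X1 (x - x0)) (Ts_eq x0 + PSeries Y1 (x - x0)))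
      as [_ E]; auto; try lra.
    rewrite E. apply series_shift; auto. }
  split.
  { intros x0 hx0. destruct (sol x0 hx0) as [p1 [p2 [q1 [q2 _]]]].
    pose proof (Dlt_pos eps sigB x0 (Ta_eq x0) (Ts_eq x0) heps hsig ltac:(lra) p1 p2 q1) as hD.
    set (e1 := Rmin (Ta_eq x0) (Ts_eq x0) / 2).
    assert (he1' : 0 < e1) by (unfold e1; apply Rdiv_lt_0_compat; [apply Rmin_pos|]; lra).
    assert (f1 : e1 <= Ta_eq x0 / 2) by (unfold e1; pose proof (Rmin_l (Ta_eq x0) (Ts_eq x0)); lra).
    assert (f2 : e1 <= Ts_eq x0 / 2) by (unfold e1; pose proof (Rmin_r (Ta_eq x0) (Ts_eq x0)); lra).
    destruct (local_analytic eps sigB Qb x0 (Ta_eq x0) (Ts_eq x0) q1 q2 ltac:(lra) e1 he1')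
      as [r1 [hr1 [X1 [Y1 [_ [_ H1]]]]]].
    exists (fun n => Ta_eq x0 * 0 ^ n + X1 n), r1. split; auto.
    intros x hx hxr. destruct (H1 (x - x0) hxr) as [k1 [k2 [k3 [k4 [k5 k6]]]]].
    replace (x0 + (x - x0)) with x in k5, k6 by ring.
    destruct (sol x hx) as [p1' [p2' [q1' [q2' _]]]].
    apply Rabs_def2 in k3. apply Rabs_def2 in k4.
    destruct (uniq_G eps sigB Qb x (Ta_eq x) (Ts_eq x) (Ta_eq x0 + PSeries X1 (x - x0)) (Ts_eq x0 + PSeries Y1 (x - x0)))
      as [E _]; auto; try lra.
    rewrite E. apply series_shift; auto. }
  split.
  { intros x y hx hy hxy. destruct (sol x hx) as [p1 [p2 [q1 [q2 _]]]].
    destruct (sol y hy) as [p1' [p2' [q1' [q2' _]]]].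
    destruct (mono_G eps sigB Qb x (Ta_eq x) (Ts_eq x) y (Ta_eq y) (Ts_eq y)) as [m1 _]; auto; lra. }
  split.
  { intros he x y hx hy hxy. destruct (sol x hx) as [p1 [p2 [q1 [q2 _]]]].
    destruct (sol y hy) as [p1' [p2' [q1' [q2' _]]]].
    destruct (mono_G eps sigB Qb x (Ta_eq x) (Ts_eq x) y (Ta_eq y) (Ts_eq y)) as [_ [m2 _]]; auto; lra. }
  { intros he x y hx hy hxy. destruct (sol x hx) as [p1 [p2 [q1 [q2 _]]]].
    destruct (sol y hy) as [p1' [p2' [q1' [q2' _]]]].
    destruct (mono_G eps sigB Qb x (Ta_eq x) (Ts_eq x) y (Ta_eq y) (Ts_eq y)) as [_ [_ m3]]; auto; lra. }
Qed.
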